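(* Let $(V,g_{ij},\rho,p)$ be a spherically symmetric static perfect fluid solution of the Euler–Einstein equations $\Delta V=4\pi(\rho+3p)V$, $R_{ij}=V^{-1}\nabla_i\nabla_jV+4\pi(\rho-p)g_{ij}$, $\nabla_ip=-V^{-1}(\rho+p)\nabla_iV$ with barotropic equation of state $\rho=\rho(p)$, and assume it is AFMD. Write $g=h(r)dr^2+r^2d\Omega^2$ and let $\{x^i\}$ be the Cartesian coordinates associated with $(r,\theta,\phi)$, so $d^3x=r^2dr\,d\Omega$. Then $$\int_{\mathbb{R}^3}(-\rho\,J_0)\,d^3x=\frac{M^2}{R}\Big(1-\frac{2M}{R}\Big)^{-1}$$ for solutions with finite extent, where $M$ is the mass and $R$ the radius of the fluid body, and $$\int_{\mathbb{R}^3}(-\rho\,J_0)\,d^3x=0$$ if the fluid extends to infinity. Here $J_0$ is evaluated at $p(x)$.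
   Context: Equation of state: $\rho$ piecewise continuous on $[0,p_{max}]$, positive for $p>0$, such that $\Gamma(p)=\int_0^p(\rho(p')+p')^{-1}dp'$ exists and $\lim_{p\to0}\rho^{-1}p$ exists. Define $H_0(p)=\rho+\rho e^{-\Gamma}+6pe^{-\Gamma}$ and $J_0(p)=\frac{1}{2\rho}[1-e^{-\Gamma(p)}]H_0(p)-3\rho^{-1}\int_0^pe^{-\Gamma(p')}\frac{1}{\rho(p')+p'}H_0(p')\,dp'$. The spacetime metric is $-V^2dt^2+g_{ij}dx^idx^j$, $V>0$. Finite extent: $p>0$ exactly for $r<R$, and the exterior is Schwarzschild, $V^2=1-2M/r$, $h=V^{-2}$ for $r\ge R$. Extending to infinity: $p>0$ everywhere. AFMD means that in suitable coordinates, for some $\epsilon>0$, $1-V=O^\infty(\|x\|^{-1})$, $g_{ij}-\delta_{ij}=O^\infty(\|x\|^{-1})$, $\rho=O^\infty(\|x\|^{-3-\epsilon})$ ($f=O^\infty(\|x\|^{-k})$ meaning $\partial^\alpha f=O(\|x\|^{-k-|\alpha|})$ for all $\alpha$). Regularity: $p(r)$ continuous and piecewise $\mathcal{C}^1$, $\rho(r)$ piecewise continuous, $V(r)$ $\mathcal{C}^1$ and piecewise $\mathcal{C}^2$. *)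

(* Defs.v *)
From Stdlib Require Import Reals List.
From Coquelicot Require Import Coquelicot.
Open Scope R_scope.

Definition pw_cont_on (f : R -> R) (a b : R) : Prop :=
  exists l : list R,
    (forall x, a <= x <= b -> ~ In x l ->
       filterlim f (within (fun y => a <= y <= b) (locally x)) (locally (f x))) /\
    (forall x, a < x <= b -> exists L, filterlim f (at_left x) (locally L)) /\
    (forall x, a <= x < b -> exists L, filterlim f (at_right x) (locally L)).

Definition Gam (rho : R -> R) (p : R) : R :=
  RInt_gen (fun q => / (rho q + q)) (at_right 0) (at_point p).

Definition H0 (rho : R -> R) (p : R) : R :=
  rho p + rho p * exp (- Gam rho p) + 6 * p * exp (- Gam rho p).

Definition J0 (rho : R -> R) (p : R) : R :=
  / (2 * rho p) * (1 - exp (- Gam rho p)) * H0 rho p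
  - 3 * / rho p *
    RInt (fun q => exp (- Gam rho q) * / (rho q + q) * H0 rho q) 0 p.

Definition eos (rho : R -> R) (pmax : R) : Prop :=
  0 < pmax /\
  pw_cont_on rho 0 pmax /\
  (forall q, 0 < q <= pmax -> 0 < rho q) /\
  (forall q, 0 < q <= pmax ->
     ex_RInt_gen (fun s => / (rho s + s)) (at_right 0) (at_point q)) /\
  (exists L, filterlim (fun q => / rho q * q) (at_right 0) (locally L)).

Definition locfin (S : R -> Prop) : Prop :=
  forall b, exists l : list R, forall x, S x -> x < b -> In x l.

Definition onesided_lims (g : R -> R) : Prop :=
  (forall r, 0 < r ->
     (exists L, filterlim g (at_left r) (locally L)) /\
     (exists L, filterlim g (at_right r) (locally L))) /\
  (exists L, filterlim g (at_right 0) (locally L)).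

Definition C0_half (f : R -> R) : Prop :=
  (forall r, 0 < r -> continuous f r) /\
  filterlim f (at_right 0) (locally (f 0)).

Definition C1_half (f : R -> R) : Prop :=
  C0_half f /\
  (forall r, 0 < r -> ex_derive f r /\ continuous (Derive f) r) /\
  (exists L, filterlim (Derive f) (at_right 0) (locally L)).

Definition pwC0_half (f : R -> R) : Prop :=
  exists S, locfin S /\
    (forall r, 0 < r -> ~ S r -> continuous f r) /\ onesided_lims f.

Definition pw_diff (f : R -> R) : Prop :=
  exists S, locfin S /\
    (forall r, 0 < r -> ~ S r -> ex_derive f r /\ continuous (Derive f) r) /\
    onesided_lims (Derive f).

Definition pwC1_half (f : R -> R) : Prop := C0_half f /\ pw_diff f.

Definition C1_pwC2_half (f : R -> R) : Prop := C1_half f /\ pw_diff (Derive f).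

(** Metric -V^2 dt^2 + h(r) dr^2 + r^2 dOmega^2; the 3-dimensional equations
      Delta V = 4 pi (rho + 3p) V,
      R_ij = V^{-1} nabla_i nabla_j V + 4 pi (rho - p) g_ij,
      nabla_i p = - V^{-1} (rho + p) nabla_i V
    written out in the coordinates (r, theta, phi) for g = h dr^2 + r^2 dOmega^2:
      R_rr = h'/(r h),  R_thth = 1 - 1/h + r h'/(2 h^2),  R_phph = sin^2 th R_thth,
      Hess_rr V = V'' - h' V'/(2h),  Hess_thth V = r V'/h,  Hess_phph = sin^2 th Hess_thth,
      Delta V = h^{-1} (V'' - h' V' /(2h) + 2 V'/r)
    (all other components vanish identically). *)
Definition field_eqs (rho : R -> R) (V h p : R -> R) : Prop :=
  exists S, locfin S /\
  forall r, 0 < r -> ~ S r ->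
    let rh := rho (p r) in
    let V1 := Derive V r in
    let V2 := Derive (Derive V) r in
    let h1 := Derive h r in
    ex_derive V r /\ ex_derive (Derive V) r /\ ex_derive h r /\ ex_derive p r /\
    / h r * (V2 - h1 * V1 / (2 * h r) + 2 * V1 / r)
      = 4 * PI * (rh + 3 * p r) * V r /\
    h1 / (r * h r)
      = / V r * (V2 - h1 * V1 / (2 * h r)) + 4 * PI * (rh - p r) * h r /\
    1 - / h r + r * h1 / (2 * (h r) ^ 2)
      = / V r * (r * V1 / h r) + 4 * PI * (rh - p r) * r ^ 2 /\
    Derive p r = - / V r * (rh + p r) * V1.

Definition regular (rho : R -> R) (V h p : R -> R) : Prop :=
  pwC1_half p /\ pwC0_half (fun r => rho (p r)) /\ C1_pwC2_half V /\ pwC1_half h.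

(** f = O^oo(|x|^{-k}) for a radial function f(|x|) on R^3, expressed through
    radial derivatives: for every n, the n-th radial derivative exists for
    large r and is O(r^{-k-n}).  (For radial functions this is equivalent to
    the Cartesian condition d^alpha f = O(|x|^{-k-|alpha|}).) *)
Definition Oinf (f : R -> R) (k : R) : Prop :=
  exists R0, 0 < R0 /\
    (forall n r, R0 < r -> ex_derive_n f n r) /\
    (forall n, exists C, forall r, R0 < r ->
        Rabs (Derive_n f n r) <= C * Rpower r (- (k + INR n))).

(** AFMD in the Cartesian coordinates x^i associated with (r, theta, phi):
    g_ij - delta_ij = (h(r) - 1) x_i x_j / r^2, which is O^oo(|x|^{-1}) iff
    h - 1 is. *)
Definition AFMD (rho : R -> R) (V h p : R -> R) : Prop :=
  exists eps, 0 < eps /\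
    Oinf (fun r => 1 - V r) 1 /\
    Oinf (fun r => h r - 1) 1 /\
    Oinf (fun r => rho (p r)) (3 + eps).

Definition finite_extent (V h p : R -> R) (M Rad : R) : Prop :=
  0 < Rad /\
  (forall r, 0 <= r -> (0 < p r <-> r < Rad)) /\
  (forall r, Rad <= r -> V r ^ 2 = 1 - 2 * M / r /\ h r = / (V r ^ 2)).

Definition extends_to_infinity (p : R -> R) : Prop :=
  forall r, 0 <= r -> 0 < p r.

(** Integrand of  int_{R^3} (- rho J_0(p(x))) d^3x  in polar coordinates,
    d^3x = r^2 dr dOmega, the angular integral giving 4 pi. *)
Definition radial_integrand (rho : R -> R) (p : R -> R) (r : R) : R :=
  4 * PI * r ^ 2 * (- (rho (p r) * J0 rho (p r))).

(* Main.v *)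
Require Import Defs.
From Stdlib Require Import Reals Lra List.
From Coquelicot Require Import Coquelicot.
Open Scope R_scope.

Definition cont_at (g : R -> R) (x : R) :=
  forall eps, 0 < eps -> exists d, 0 < d /\ forall y, Rabs (y - x) < d -> Rabs (g y - g x) < eps.
Definition lim_right (g : R -> R) (x L : R) :=
  forall eps, 0 < eps -> exists d, 0 < d /\ forall y, x < y < x + d -> Rabs (g y - L) < eps.
Definition lim_left (g : R -> R) (x L : R) :=
  forall eps, 0 < eps -> exists d, 0 < d /\ forall y, x - d < y < x -> Rabs (g y - L) < eps.
Definition cont_in (g : R -> R) (a b x : R) :=
  forall eps, 0 < eps -> exists d, 0 < d /\ forall y, a <= y <= b -> Rabs (y - x) < d -> Rabs (g y - g x) < eps.

Lemma ball_R (x y e : R) : ball x e y <-> Rabs (y - x) < e.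
Proof. reflexivity. Qed.

Lemma locally_R (x : R) (P : R -> Prop) : locally x P <-> exists d, 0 < d /\ forall y, Rabs (y - x) < d -> P y.
Proof.
  split.
  - intros [e He]. exists e. split. apply cond_pos. intros y Hy. apply He. exact Hy.
  - intros [d [Hd H]]. exists (mkposreal d Hd). intros y Hy. apply H. exact Hy.
Qed.

Lemma cont_at_iff g x : continuous g x <-> cont_at g x.
Proof.
  split.
  - intros H eps Heps. 
    destruct (proj1 (filterlim_locally g (g x)) H (mkposreal eps Heps)) as [d Hd].
    exists d. split. apply cond_pos. intros y Hy. apply (Hd y Hy).
  - intros H. apply (filterlim_locally g (g x)). intros eps.
    destruct (H eps (cond_pos eps)) as [d [Hd H1]].
    apply locally_R. exists d. split; auto.
Qed.

Lemma lim_right_of g x L : filterlim g (at_right x) (locally L) -> lim_right g x L.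
Proof.
  intros H eps Heps.
  destruct (proj1 (filterlim_locally g L) H (mkposreal eps Heps)) as [d Hd].
  exists d. split. apply cond_pos. intros y Hy. apply (Hd y).
  apply ball_R. rewrite Rabs_right; lra. lra.
Qed.

Lemma lim_left_of g x L : filterlim g (at_left x) (locally L) -> lim_left g x L.
Proof.
  intros H eps Heps.
  destruct (proj1 (filterlim_locally g L) H (mkposreal eps Heps)) as [d Hd].
  exists d. split. apply cond_pos. intros y Hy. apply (Hd y).
  apply ball_R. rewrite Rabs_left; lra. lra.
Qed.

Lemma cont_in_of g a b x :
  filterlim g (within (fun y => a <= y <= b) (locally x)) (locally (g x)) -> cont_in g a b x.
Proof.
  intros H eps Heps.
  destruct (proj1 (filterlim_locally g (g x)) H (mkposreal eps Heps)) as [d Hd].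
  exists d. split. apply cond_pos. intros y Hy1 Hy2. apply (Hd y Hy2 Hy1).
Qed.

Lemma right_cont_of g x : filterlim g (at_right x) (locally (g x)) -> lim_right g x (g x).
Proof. apply lim_right_of. Qed.

Lemma cont_at_right g x : cont_at g x -> lim_right g x (g x).
Proof. intros H e He. destruct (H e He) as [d [Hd H1]]. exists d. split; auto.
  intros y Hy. apply H1. rewrite Rabs_right; lra. Qed.

Lemma cont_at_left g x : cont_at g x -> lim_left g x (g x).
Proof. intros H e He. destruct (H e He) as [d [Hd H1]]. exists d. split; auto.
  intros y Hy. apply H1. rewrite Rabs_left; lra. Qed.

Lemma cont_at_in g a b x : cont_at g x -> cont_in g a b x.
Proof. intros H e He. destruct (H e He) as [d [Hd H1]]. exists d. split; auto. Qed.

Definition clamp (a b x : R) := Rmax a (Rmin b x).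

Lemma clamp_in a b x : a <= b -> a <= clamp a b x <= b.
Proof. intros. unfold clamp, Rmax, Rmin. repeat destruct Rle_dec; lra. Qed.

Lemma clamp_id a b x : a <= x <= b -> clamp a b x = x.
Proof. intros. unfold clamp, Rmax, Rmin. repeat destruct Rle_dec; lra. Qed.

Lemma clamp_lip a b x y : Rabs (clamp a b y - clamp a b x) <= Rabs (y - x).
Proof. unfold clamp, Rmax, Rmin. repeat destruct Rle_dec;
  repeat (match goal with |- context [Rabs ?z] => destruct (Rcase_abs z) ; [rewrite (Rabs_left z) by lra | rewrite (Rabs_right z) by lra] end); lra.
Qed.

Lemma clamp_cont g a b x : a <= b -> cont_in g a b (clamp a b x) -> cont_at (fun y => g (clamp a b y)) x.
Proof.
  intros Hab H e He. destruct (H e He) as [d [Hd H1]]. exists d. split; auto.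
  intros y Hy. apply H1. apply clamp_in; auto. eapply Rle_lt_trans. apply clamp_lip. exact Hy.
Qed.

Lemma cont_in_clamp_all g a b : a <= b -> (forall x, a <= x <= b -> cont_in g a b x) ->
  forall x, cont_at (fun y => g (clamp a b y)) x.
Proof. intros. apply clamp_cont; auto. apply H0. apply clamp_in; auto. Qed.

Lemma cont_at_const c x : cont_at (fun _ => c) x.
Proof. intros e He. exists 1. split. lra. intros. rewrite Rminus_eq_0, Rabs_R0. auto. Qed.

Lemma cont_at_id x : cont_at (fun y => y) x.
Proof. intros e He. exists e. split; auto. Qed.

Lemma cont_at_plus f g x : cont_at f x -> cont_at g x -> cont_at (fun y => f y + g y) x.
Proof. rewrite <- !cont_at_iff. intros. apply (continuous_plus f g); auto. Qed.
Lemma cont_at_mult f g x : cont_at f x -> cont_at g x -> cont_at (fun y => f y * g y) x.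
Proof. rewrite <- !cont_at_iff. intros. apply (continuous_mult f g); auto. Qed.
Lemma cont_at_opp f x : cont_at f x -> cont_at (fun y => - f y) x.
Proof. rewrite <- !cont_at_iff. intros. apply (continuous_opp f); auto. Qed.
Lemma cont_at_comp f g x : cont_at g x -> cont_at f (g x) -> cont_at (fun y => f (g y)) x.
Proof. rewrite <- !cont_at_iff. intros. apply (continuous_comp g f); auto. Qed.
Lemma cont_at_exp x : cont_at exp x.
Proof. rewrite <- cont_at_iff. apply continuity_pt_filterlim. apply derivable_continuous_pt. apply derivable_pt_exp. Qed.
Lemma cont_at_inv x : x <> 0 -> cont_at Rinv x.
Proof. intros. rewrite <- cont_at_iff. apply continuity_pt_filterlim. apply continuity_pt_inv. apply continuity_pt_id. auto. Qed.

Lemma is_derive_cont_at f x l : is_derive f x l -> cont_at f x.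
Proof. intros H. apply cont_at_iff.
  apply (ex_derive_continuous (K:=R_AbsRing) (V:=R_NormedModule) f). exists l. exact H. Qed.

Lemma Rabs_le_b x b : Rabs x <= b -> -b <= x <= b.
Proof. unfold Rabs. destruct Rcase_abs; lra. Qed.
Lemma Rabs_lt_b x b : Rabs x < b -> -b < x < b.
Proof. unfold Rabs. destruct Rcase_abs; lra. Qed.
Lemma Rabs_lt_i x b : -b < x < b -> Rabs x < b.
Proof. unfold Rabs. destruct Rcase_abs; lra. Qed.
Lemma Rabs_le_i x b : -b <= x <= b -> Rabs x <= b.
Proof. unfold Rabs. destruct Rcase_abs; lra. Qed.

Lemma cont_at_clamp a b x : cont_at (clamp a b) x.
Proof. intros e He. exists e. split; auto. intros y Hy. eapply Rle_lt_trans. apply clamp_lip. auto. Qed.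

Lemma cont_in_sub g a b a' b' x : a <= a' -> b' <= b -> cont_in g a b x -> cont_in g a' b' x.
Proof. intros H1 H2 H e He. destruct (H e He) as [d [Hd H3]]. exists d. split; auto.
  intros y Hy. apply H3. lra. Qed.

Lemma cont_in_interior g a b x : a < x < b -> cont_in g a b x -> cont_at g x.
Proof. intros Hx H e He. destruct (H e He) as [d [Hd H3]]. exists (Rmin d (Rmin (x - a) (b - x))).
  assert (Hm1 := Rmin_l d (Rmin (x - a) (b - x))). assert (Hm2 := Rmin_r d (Rmin (x - a) (b - x))).
  assert (Hm3 := Rmin_l (x - a) (b - x)). assert (Hm4 := Rmin_r (x - a) (b - x)).
  split. repeat apply Rmin_pos; lra. intros y Hy. apply Rabs_lt_b in Hy as Hy'. apply H3. lra. lra. Qed.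

Lemma lim_right_nonneg g x L d0 : 0 < d0 -> lim_right g x L -> (forall y, x < y < x + d0 -> 0 <= g y) -> 0 <= L.
Proof. intros Hd0 H Hp. apply Rnot_lt_le. intros HL. destruct (H (- L) ltac:(lra)) as [d [Hd H1]].
  set (y := x + Rmin d d0 / 2). assert (Rmin d d0 <= d) by apply Rmin_l. assert (Rmin d d0 <= d0) by apply Rmin_r.
  assert (0 < Rmin d d0) by (apply Rmin_pos; lra).
  specialize (H1 y ltac:(unfold y; lra)). specialize (Hp y ltac:(unfold y; lra)). apply Rabs_lt_b in H1. lra. Qed.

Lemma lim_left_nonneg g x L d0 : 0 < d0 -> lim_left g x L -> (forall y, x - d0 < y < x -> 0 <= g y) -> 0 <= L.
Proof. intros Hd0 H Hp. apply Rnot_lt_le. intros HL. destruct (H (- L) ltac:(lra)) as [d [Hd H1]].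
  set (y := x - Rmin d d0 / 2). assert (Rmin d d0 <= d) by apply Rmin_l. assert (Rmin d d0 <= d0) by apply Rmin_r.
  assert (0 < Rmin d d0) by (apply Rmin_pos; lra).
  specialize (H1 y ltac:(unfold y; lra)). specialize (Hp y ltac:(unfold y; lra)). apply Rabs_lt_b in H1. lra. Qed.

Lemma cont_at_div f g x : cont_at f x -> cont_at g x -> g x <> 0 -> cont_at (fun y => f y / g y) x.
Proof. intros. unfold Rdiv. apply cont_at_mult; auto. apply (cont_at_comp Rinv g); auto. apply cont_at_inv; auto. Qed.

Lemma cont_at_ext_loc f g r : (exists d, 0 < d /\ forall s, Rabs (s - r) < d -> f s = g s) -> cont_at g r -> cont_at f r.
Proof. intros [d [Hd H]] Hg e He. destruct (Hg e He) as [d1 [Hd1 H1]]. exists (Rmin d d1).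
  split. apply Rmin_pos; auto. intros y Hy. assert (Rmin d d1 <= d) by apply Rmin_l. assert (Rmin d d1 <= d1) by apply Rmin_r.
  rewrite (H y), (H r). apply H1. lra. rewrite Rminus_eq_0, Rabs_R0; auto. lra. Qed.

Lemma cont_in_comp_at g a b p r : cont_in g a b (p r) -> cont_at p r ->
  (exists d, 0 < d /\ forall s, Rabs (s - r) < d -> a <= p s <= b) -> cont_at (fun s => g (p s)) r.
Proof. intros Hg Hp [d [Hd Hab]] e He. destruct (Hg e He) as [d1 [Hd1 H1]].
  destruct (Hp d1 Hd1) as [d2 [Hd2 H2]]. exists (Rmin d d2). split. apply Rmin_pos; auto.
  intros y Hy. assert (Rmin d d2 <= d) by apply Rmin_l. assert (Rmin d d2 <= d2) by apply Rmin_r.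
  apply H1. apply Hab. lra. apply H2. lra. Qed.

Lemma cont_in_comp g a b p x y s : cont_in g a b (p s) -> cont_in p x y s ->
  (forall t, x <= t <= y -> a <= p t <= b) -> x <= s <= y -> cont_in (fun t => g (p t)) x y s.
Proof. intros Hg Hp Hab Hs e He. destruct (Hg e He) as [d1 [Hd1 H1]].
  destruct (Hp d1 Hd1) as [d2 [Hd2 H2]]. exists d2. split; [auto|].
  intros t Ht Hts. apply H1. apply Hab; auto. auto. Qed.

Lemma cont_at_pos_near g r : cont_at g r -> 0 < g r -> exists d, 0 < d /\ forall s, Rabs (s - r) < d -> 0 < g s.
Proof. intros H Hg. destruct (H (g r) Hg) as [d [Hd H1]]. exists d. split; auto.
  intros s Hs. specialize (H1 s Hs). apply Rabs_lt_b in H1. lra. Qed.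

Lemma cont_at_minus f g x : cont_at f x -> cont_at g x -> cont_at (fun y => f y - g y) x.
Proof. intros. unfold Rminus. apply cont_at_plus; auto. apply cont_at_opp; auto. Qed.
Lemma cont_at_pow f n x : cont_at f x -> cont_at (fun y => f y ^ n) x.
Proof. intros H. induction n. simpl. apply cont_at_const. simpl. apply cont_at_mult; auto. Qed.
Lemma cont_at_Rinv f x : cont_at f x -> f x <> 0 -> cont_at (fun y => / f y) x.
Proof. intros. apply (cont_at_comp Rinv f); auto. apply cont_at_inv; auto. Qed.
Lemma cont_at_divc f c x : cont_at f x -> cont_at (fun y => f y / c) x.
Proof. intros. unfold Rdiv. apply cont_at_mult; auto. apply cont_at_const. Qed.

Lemma cont_in_of_clamp g x y s : x <= y -> x <= s <= y -> cont_at (fun t => g (clamp x y t)) s -> cont_in g x y s.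
Proof. intros Hxy Hs H e He. destruct (H e He) as [d [Hd H1]]. exists d. split; auto.
  intros t Ht Hts. specialize (H1 t Hts). rewrite !clamp_id in H1 by lra. auto. Qed.

Lemma cont_in_half g : (forall s, 0 < s -> cont_at g s) -> lim_right g 0 (g 0) ->
  forall x y s, 0 <= x -> x <= s <= y -> cont_in g x y s.
Proof. intros Hc Hr x y s Hx Hs. destruct (Req_EM_T s 0) as [->|Hs0].
  - intros e He. destruct (Hr e He) as [d [Hd H]]. exists d. split; auto.
    intros t Ht Hts. destruct (Req_EM_T t 0) as [->|]. rewrite Rminus_eq_0, Rabs_R0; auto.
    apply H. rewrite Rminus_0_r in Hts. apply Rabs_lt_b in Hts. lra.
  - apply cont_at_in. apply Hc. lra. Qed.

Definition ext_fun (g : R -> R) (a b La Lb : R) (x : R) :=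
  if Req_EM_T x a then La else if Req_EM_T x b then Lb else g x.

Lemma piece_ext g a b La Lb : a < b ->
  (forall x, a < x < b -> cont_at g x) -> lim_right g a La -> lim_left g b Lb ->
  exists phi, (forall x, cont_at phi x) /\ (forall x, a < x < b -> phi x = g x) /\
    (forall x, phi x = La \/ phi x = Lb \/ exists z, a < z < b /\ phi x = g z).
Proof.
  intros Hab Hc Hr Hl.
  exists (fun y => ext_fun g a b La Lb (clamp a b y)). split.
  - apply cont_in_clamp_all. lra. intros x Hx.
    intros e He.
    destruct (Req_EM_T x a) as [->|Hxa].
    + destruct (Hr e He) as [d [Hd H]]. exists (Rmin d (b - a)). split.
      apply Rmin_pos; lra. intros y Hy1 Hy2.
      assert (Hm1 := Rmin_l d (b-a)). assert (Hm2 := Rmin_r d (b-a)).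
      unfold ext_fun. destruct (Req_EM_T a a); [|congruence].
      destruct (Req_EM_T y a). rewrite Rminus_eq_0, Rabs_R0; auto.
      destruct (Req_EM_T y b). exfalso. rewrite Rabs_right in Hy2; lra.
      apply H. rewrite Rabs_right in Hy2; lra.
    + destruct (Req_EM_T x b) as [->|Hxb].
      * destruct (Hl e He) as [d [Hd H]]. exists (Rmin d (b - a)). split.
        apply Rmin_pos; lra. intros y Hy1 Hy2.
        assert (Hm1 := Rmin_l d (b-a)). assert (Hm2 := Rmin_r d (b-a)).
        unfold ext_fun. destruct (Req_EM_T b a); [lra|]. destruct (Req_EM_T b b); [|congruence].
        destruct (Req_EM_T y a). exfalso. rewrite Rabs_left in Hy2; lra.
        destruct (Req_EM_T y b). rewrite Rminus_eq_0, Rabs_R0; auto.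
        apply H. rewrite Rabs_left in Hy2; lra.
      * assert (Hx' : a < x < b) by lra.
        destruct (Hc x Hx' e He) as [d [Hd H]].
        exists (Rmin d (Rmin (x - a) (b - x))). split.
        repeat apply Rmin_pos; lra. intros y Hy1 Hy2.
        assert (Hm1 := Rmin_l d (Rmin (x - a) (b - x))). assert (Hm2 := Rmin_r d (Rmin (x - a) (b - x))).
        assert (Hm3 := Rmin_l (x - a) (b - x)). assert (Hm4 := Rmin_r (x - a) (b - x)).
        unfold ext_fun. destruct (Req_EM_T x a); [lra|]. destruct (Req_EM_T x b); [lra|].
        destruct (Req_EM_T y a). exfalso. subst. rewrite Rabs_left in Hy2; lra.
        destruct (Req_EM_T y b). exfalso. subst. rewrite Rabs_right in Hy2; lra.
        apply H. lra.
  - split.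
    + intros x Hx. rewrite clamp_id by lra. unfold ext_fun.
      destruct (Req_EM_T x a); [lra|]. destruct (Req_EM_T x b); [lra|]. reflexivity.
    + intros x. unfold ext_fun. destruct (Req_EM_T _ a); auto. destruct (Req_EM_T _ b); auto.
      right; right. exists (clamp a b x). split; auto. pose proof (clamp_in a b x). lra.
Qed.

Lemma pw_combine (f : R -> R) (G : R -> R) (l : list R) :
  forall a b, a <= b ->
  (forall x y, a <= x -> x < y -> y <= b -> (forall z, x < z < y -> ~ In z l) -> is_RInt f x y (G y - G x)) ->
  is_RInt f a b (G b - G a).
Proof.
  induction l as [|c l IH]; intros a b Hab H.
  - destruct (Req_EM_T a b) as [->|Hne].
    + rewrite Rminus_eq_0. apply (is_RInt_point f b).
    + apply H; try lra. intros z _ [].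
  - destruct (Rlt_dec a c) as [Hac|Hac]; [destruct (Rlt_dec c b) as [Hcb|Hcb]|].
    + replace (G b - G a) with (plus (G c - G a) (G b - G c)) by (unfold plus; simpl; ring).
      apply (is_RInt_Chasles f a c b).
      * apply IH. lra. intros x y Hx Hxy Hy Hz. apply H; try lra.
        intros z Hz' [Hzc|Hzl]. lra. apply (Hz z Hz' Hzl).
      * apply IH. lra. intros x y Hx Hxy Hy Hz. apply H; try lra.
        intros z Hz' [Hzc|Hzl]. lra. apply (Hz z Hz' Hzl).
    + apply IH; auto. intros x y Hx Hxy Hy Hz. apply H; try lra.
      intros z Hz' [Hzc|Hzl]. lra. apply (Hz z Hz' Hzl).
    + apply IH; auto. intros x y Hx Hxy Hy Hz. apply H; try lra.
      intros z Hz' [Hzc|Hzl]. lra. apply (Hz z Hz' Hzl).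
Qed.

Lemma pw_combine_ex (f : R -> R) (l : list R) :
  forall a b, a <= b ->
  (forall x y, a <= x -> x < y -> y <= b -> (forall z, x < z < y -> ~ In z l) -> ex_RInt f x y) ->
  ex_RInt f a b.
Proof.
  induction l as [|c l IH]; intros a b Hab H.
  - destruct (Req_EM_T a b) as [->|Hne].
    + exists zero. apply (is_RInt_point f b).
    + apply H; try lra. intros z _ [].
  - destruct (Rlt_dec a c) as [Hac|Hac]; [destruct (Rlt_dec c b) as [Hcb|Hcb]|].
    + apply (ex_RInt_Chasles f a c b).
      * apply IH. lra. intros x y Hx Hxy Hy Hz. apply H; try lra.
        intros z Hz' [Hzc|Hzl]. lra. apply (Hz z Hz' Hzl).
      * apply IH. lra. intros x y Hx Hxy Hy Hz. apply H; try lra.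
        intros z Hz' [Hzc|Hzl]. lra. apply (Hz z Hz' Hzl).
    + apply IH; auto. intros x y Hx Hxy Hy Hz. apply H; try lra.
      intros z Hz' [Hzc|Hzl]. lra. apply (Hz z Hz' Hzl).
    + apply IH; auto. intros x y Hx Hxy Hy Hz. apply H; try lra.
      intros z Hz' [Hzc|Hzl]. lra. apply (Hz z Hz' Hzl).
Qed.

Lemma piece_FTC (phi G : R -> R) a b : a < b ->
  (forall x, cont_at phi x) ->
  (forall x, a < x < b -> is_derive G x (phi x)) ->
  cont_in G a b a -> cont_in G a b b ->
  is_RInt phi a b (G b - G a).
Proof.
  intros Hab Hphi HG Ha Hb.
  assert (Hex : forall x y, ex_RInt phi x y).
  { intros. apply (ex_RInt_continuous (V:=R_CompleteNormedModule)). intros. apply cont_at_iff. auto. }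
  set (K := fun x => G (clamp a b x) - RInt phi a x).
  assert (HK : forall x, a < x < b -> is_derive K x 0).
  { intros x Hx. replace 0 with (phi x - phi x) by ring.
    apply (is_derive_minus (fun x => G (clamp a b x)) (fun x => RInt phi a x)).
    - apply (is_derive_ext_loc G). apply locally_R. exists (Rmin (x - a) (b - x)).
      split. apply Rmin_pos; lra. intros y Hy.
      assert (Hm3 := Rmin_l (x - a) (b - x)). assert (Hm4 := Rmin_r (x - a) (b - x)).
      apply Rabs_def2 in Hy. rewrite clamp_id; auto. lra. apply HG; auto.
    - apply (is_derive_RInt phi (fun x => RInt phi a x) a x).
      apply locally_R. exists 1. split. lra. intros. apply (RInt_correct (V:=R_CompleteNormedModule)). apply Hex.
      apply cont_at_iff. auto. }
  assert (HKc : forall x, a <= x <= b -> continuity_pt K x).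
  { intros x Hx. apply continuity_pt_filterlim. apply cont_at_iff. unfold K.
    apply cont_at_plus. 
    - apply clamp_cont. lra. rewrite clamp_id by lra.
      destruct (Req_EM_T x a) as [->|]; auto. destruct (Req_EM_T x b) as [->|]; auto.
      apply cont_at_in. eapply is_derive_cont_at. apply HG. lra.
    - apply cont_at_opp. eapply is_derive_cont_at. apply (is_derive_RInt phi (fun x => RInt phi a x) a x).
      apply locally_R. exists 1. split. lra. intros. apply (RInt_correct (V:=R_CompleteNormedModule)). apply Hex.
      apply cont_at_iff. auto. }
  destruct (MVT_gen K a b (fun _ => 0)) as [c [_ Hc]].
  - rewrite Rmin_left, Rmax_right by lra. auto.
  - rewrite Rmin_left, Rmax_right by lra. auto.
  - unfold K in Hc. rewrite !clamp_id in Hc by lra. rewrite RInt_point in Hc.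
    replace (G b - G a) with (RInt phi a b).
    apply (RInt_correct (V:=R_CompleteNormedModule)). apply Hex. unfold zero in Hc; simpl in Hc. lra.
Qed.

Lemma RInt_abs_bound (g : R -> R) x y M : ex_RInt g x y ->
  (forall q, Rmin x y <= q <= Rmax x y -> Rabs (g q) <= M) ->
  Rabs (RInt g x y) <= Rabs (y - x) * M.
Proof.
  intros Hex H. destruct (Rle_dec x y) as [Hxy|Hxy].
  - rewrite (Rabs_right (y - x)) by lra. apply abs_RInt_le_const; auto.
    intros t Ht. apply H. rewrite Rmin_left, Rmax_right; lra.
  - rewrite <- (opp_RInt_swap (V:=R_CompleteNormedModule) g y x) by (apply (ex_RInt_swap (V:=R_NormedModule)); auto).
    unfold opp; simpl. rewrite Rabs_Ropp. rewrite (Rabs_left (y - x)) by lra.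
    replace (- (y - x)) with (x - y) by ring.
    apply abs_RInt_le_const. lra. apply (ex_RInt_swap (V:=R_NormedModule)); auto.
    intros t Ht. apply H. rewrite Rmin_right, Rmax_left; lra.
Qed.

Lemma RInt_dev_bound (g : R -> R) x y c e : ex_RInt g x y ->
  (forall q, Rmin x y <= q <= Rmax x y -> Rabs (g q - c) <= e) ->
  Rabs (RInt g x y - (y - x) * c) <= Rabs (y - x) * e.
Proof.
  intros Hex H.
  assert (E : RInt (fun q => g q - c) x y = RInt g x y - (y - x) * c).
  { rewrite (RInt_minus (V:=R_CompleteNormedModule) g (fun _ => c)); auto.
    rewrite RInt_const. reflexivity. apply (ex_RInt_const (V:=R_NormedModule)). }
  rewrite <- E. apply RInt_abs_bound; auto.
  apply (ex_RInt_minus (V:=R_NormedModule) g (fun _ => c)); auto.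
  apply (ex_RInt_const (V:=R_NormedModule)).
Qed.

Lemma IVT_loc (p : R -> R) r d s q : 0 < d ->
  (forall t, Rabs (t - r) <= d -> cont_at p t) -> Rabs (s - r) <= d ->
  Rmin (p r) (p s) <= q <= Rmax (p r) (p s) ->
  exists t, Rmin r s <= t <= Rmax r s /\ p t = q.
Proof.
  intros Hd Hc Hs Hq.
  set (pc := fun y => p (clamp (r - d) (r + d) y)).
  assert (Hpc : continuity pc).
  { intros y. apply continuity_pt_filterlim. apply cont_at_iff. apply cont_in_clamp_all. lra.
    intros x Hx. apply cont_at_in. apply Hc. apply Rabs_le. lra. }
  assert (Er : pc r = p r) by (unfold pc; rewrite clamp_id; auto; lra).
  apply Rabs_le_b in Hs.
  assert (Es : pc s = p s) by (unfold pc; rewrite clamp_id; auto; lra).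
  destruct (IVT_gen pc r s q Hpc) as [t [Ht Hpt]]. rewrite Er, Es; auto.
  exists t. split; auto. unfold pc in Hpt. rewrite clamp_id in Hpt; auto.
  unfold Rmin, Rmax in Ht. destruct Rle_dec; lra.
Qed.

Lemma chain_lemma (Phi g p : R -> R) (D : R -> Prop) r dp :
  (forall x y, D x -> D y -> ex_RInt g x y /\ Phi y - Phi x = RInt g x y) ->
  (exists d, 0 < d /\ forall s, Rabs (s - r) < d -> D (p s) /\ cont_at p s) ->
  cont_at (fun s => g (p s)) r ->
  is_derive p r dp ->
  is_derive (fun s => Phi (p s)) r (dp * g (p r)).
Proof.
  intros HPhi [d0 [Hd0 HD]] Hgc Hp.
  apply is_derive_Reals. apply is_derive_Reals in Hp.
  intros eps Heps.
  set (c := g (p r)).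
  set (e1 := Rmin 1 (eps / (2 * (Rabs c + 1)))).
  assert (He1 : 0 < e1). { unfold e1. apply Rmin_pos. lra. apply Rdiv_lt_0_compat. lra.
    assert (0 <= Rabs c) by apply Rabs_pos. lra. }
  set (e2 := eps / (2 * (Rabs dp + 1))).
  assert (He2 : 0 < e2). { unfold e2. apply Rdiv_lt_0_compat. lra.
    assert (0 <= Rabs dp) by apply Rabs_pos. lra. }
  destruct (Hp e1 He1) as [d1 Hd1].
  destruct (Hgc e2 He2) as [d2 [Hd2 Hg]].
  exists (mkposreal (Rmin (d0/2) (Rmin d1 d2)) ltac:(repeat apply Rmin_pos; try apply cond_pos; lra)).
  intros h Hh0 Hh. simpl in Hh.
  assert (Hm1 := Rmin_l (d0/2) (Rmin d1 d2)). assert (Hm2 := Rmin_r (d0/2) (Rmin d1 d2)).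
  assert (Hm3 := Rmin_l d1 d2). assert (Hm4 := Rmin_r d1 d2).
  assert (Hh1 : Rabs h < d1) by lra.
  specialize (Hd1 h Hh0 Hh1).
  set (x := p r). set (y := p (r + h)).
  assert (Dx : D x). { apply HD. rewrite Rminus_eq_0, Rabs_R0. lra. }
  assert (Dy : D y). { apply HD. replace (r + h - r) with h by ring. lra. }
  destruct (HPhi x y Dx Dy) as [Hex HE].
  fold x y in Hd1.
  assert (Hb : Rabs (RInt g x y - (y - x) * c) <= Rabs (y - x) * e2).
  { apply RInt_dev_bound; auto. intros q Hq.
    destruct (IVT_loc p r (d0/2) (r + h) q) as [t [Ht Hpt]].
    { lra. }
    { intros t Ht. apply HD. lra. }
    { replace (r + h - r) with h by ring. lra. }
    { exact Hq. }
    subst q. unfold c. apply Rlt_le. apply Hg.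
    apply Rabs_lt_b in Hh.
    unfold Rmin, Rmax in Ht. destruct Rle_dec; apply Rabs_lt_i; lra. }
  rewrite HE.
  assert (Habs : Rabs ((y - x) / h) <= Rabs dp + 1).
  { assert (Rabs ((y - x)/h) - Rabs dp <= Rabs ((y - x)/h - dp)) by apply Rabs_triang_inv.
    assert (e1 <= 1) by apply Rmin_l. lra. }
  replace (RInt g x y / h - dp * c) with ((RInt g x y - (y - x) * c) / h + c * ((y - x) / h - dp))
    by (field; auto).
  eapply Rle_lt_trans. apply Rabs_triang.
  rewrite Rabs_div by auto. rewrite Rabs_mult.
  assert (Hhp : 0 < Rabs h) by (apply Rabs_pos_lt; auto).
  assert (A1 : Rabs (RInt g x y - (y - x) * c) / Rabs h <= (Rabs dp + 1) * e2).
  { apply (Rmult_le_reg_r (Rabs h)); auto. unfold Rdiv. rewrite Rmult_assoc, Rinv_l, Rmult_1_r by lra.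
    eapply Rle_trans. apply Hb. rewrite Rabs_div in Habs by auto.
    apply (Rmult_le_compat_r (Rabs h)) in Habs; [|lra].
    unfold Rdiv in Habs. rewrite Rmult_assoc, Rinv_l, Rmult_1_r in Habs by lra.
    replace ((Rabs dp + 1) * e2 * Rabs h) with (((Rabs dp + 1) * Rabs h) * e2) by ring.
    apply Rmult_le_compat_r; lra. }
  assert (A2 : (Rabs dp + 1) * e2 = eps / 2).
  { unfold e2. field. assert (0 <= Rabs dp) by apply Rabs_pos. lra. }
  assert (A3 : Rabs c * Rabs ((y - x) / h - dp) < eps / 2).
  { assert (0 <= Rabs c) by apply Rabs_pos.
    assert (e1 <= eps / (2 * (Rabs c + 1))) by apply Rmin_r.
    apply Rle_lt_trans with (Rabs c * (eps / (2 * (Rabs c + 1)))).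
    apply Rmult_le_compat_l; lra.
    apply (Rmult_lt_reg_r (2 * (Rabs c + 1))). lra.
    field_simplify; lra. }
  lra.
Qed.

Lemma gen_extract (f : R -> R) q l : is_RInt_gen f (at_right 0) (at_point q) l ->
  forall eps, 0 < eps -> exists d, 0 < d /\ forall a, 0 < a < d -> exists v, is_RInt f a q v /\ Rabs (v - l) < eps.
Proof.
  intros H eps Heps.
  specialize (H (fun v => Rabs (v - l) < eps)).
  destruct H as [Q R0 HQ HR HP].
  - apply locally_R. exists eps. split; auto.
  - destruct HQ as [d Hd]. exists d. split. apply cond_pos.
    intros a Ha. destruct (HP a q) as [v [Hv1 Hv2]].
    + apply Hd. apply ball_R. rewrite Rminus_0_r, Rabs_right; lra. lra.
    + apply HR.
    + exists v. split; auto.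
Qed.

Section EOS.
Variable rho : R -> R.
Variable pmax : R.
Hypothesis Heos : eos rho pmax.

Definition f0 q := / (rho q + q).

Lemma pmax_pos : 0 < pmax.
Proof. apply Heos. Qed.
Lemma rho_pos q : 0 < q <= pmax -> 0 < rho q.
Proof. apply Heos. Qed.

Lemma Gam_is q : 0 < q <= pmax -> is_RInt_gen f0 (at_right 0) (at_point q) (Gam rho q).
Proof.
  intros Hq. destruct Heos as [_ [_ [_ [H _]]]].
  unfold Gam. apply (RInt_gen_correct (V:=R_CompleteNormedModule)). apply H; auto.
Qed.

Lemma ex_f0 x y : 0 < x <= pmax -> 0 < y <= pmax -> ex_RInt f0 x y.
Proof.
  intros Hx Hy.
  assert (Hm : forall a b, 0 < a <= b -> b <= pmax -> ex_RInt f0 a b).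
  { intros a b Hab Hb. destruct (gen_extract f0 b _ (Gam_is b ltac:(lra)) 1 ltac:(lra)) as [d [Hd H]].
    destruct (H (Rmin (d/2) (a/2))) as [v [Hv _]].
    { split. apply Rmin_pos; lra. assert (Rmin (d/2) (a/2) <= d/2) by apply Rmin_l. lra. }
    apply (ex_RInt_Chasles_2 (V:=R_CompleteNormedModule) f0 (Rmin (d / 2) (a / 2))).
    assert (Rmin (d/2) (a/2) <= a/2) by apply Rmin_r. lra. exists v. exact Hv. }
  destruct (Rle_dec x y). apply Hm; lra. apply (ex_RInt_swap (V:=R_NormedModule)). apply Hm; lra.
Qed.

Lemma Gam_diff x y : 0 < x <= pmax -> 0 < y <= pmax -> Gam rho y - Gam rho x = RInt f0 x y.
Proof.
  intros Hx Hy.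
  assert (H : is_RInt_gen f0 (at_right 0) (at_point y) (plus (Gam rho x) (RInt f0 x y))).
  { apply (is_RInt_gen_Chasles f0 x). apply Gam_is; auto.
    apply is_RInt_gen_at_point. apply (RInt_correct (V:=R_CompleteNormedModule)). apply ex_f0; auto. }
  apply (is_RInt_gen_unique (V:=R_CompleteNormedModule)) in H.
  change (RInt_gen f0 (at_right 0) (at_point y) - Gam rho x = RInt f0 x y). rewrite H. unfold plus; simpl. ring.
Qed.

Lemma Gam_lim0 : lim_right (Gam rho) 0 0.
Proof.
  intros eps Heps.
  destruct (gen_extract f0 pmax _ (Gam_is pmax ltac:(pose pmax_pos; lra)) eps Heps) as [d [Hd H]].
  exists (Rmin d pmax). split. apply Rmin_pos; auto. apply pmax_pos.
  intros a Ha. assert (Rmin d pmax <= d) by apply Rmin_l. assert (Rmin d pmax <= pmax) by apply Rmin_r.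
  destruct (H a ltac:(lra)) as [v [Hv1 Hv2]].
  apply (is_RInt_unique (V:=R_CompleteNormedModule)) in Hv1.
  rewrite <- Hv1 in Hv2. rewrite <- Gam_diff in Hv2 by lra.
  rewrite Rminus_0_r. replace (Gam rho a) with (- (Gam rho pmax - Gam rho a - Gam rho pmax)) by ring.
  rewrite Rabs_Ropp. exact Hv2.
Qed.

Lemma f0_pos q : 0 < q <= pmax -> 0 < f0 q.
Proof. intros. unfold f0. apply Rinv_0_lt_compat. pose proof (rho_pos q H). lra. Qed.

Lemma f0_bound x0 q : 0 < x0 -> x0 <= q <= pmax -> Rabs (f0 q) <= / x0.
Proof. intros. rewrite Rabs_right by (apply Rle_ge, Rlt_le, f0_pos; lra). unfold f0.
  apply Rinv_le_contravar. auto. pose proof (rho_pos q ltac:(lra)). lra. Qed.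

Lemma Gam_nonneg q : 0 < q <= pmax -> 0 <= Gam rho q.
Proof.
  intros Hq. apply Rnot_lt_le. intros Hneg.
  destruct (Gam_lim0 (- Gam rho q) ltac:(lra)) as [d [Hd H]].
  set (a := Rmin (d/2) (q/2)).
  assert (a <= d/2) by apply Rmin_l. assert (a <= q/2) by apply Rmin_r.
  assert (0 < a) by (apply Rmin_pos; lra).
  specialize (H a ltac:(lra)). rewrite Rminus_0_r in H. apply Rabs_lt_b in H.
  assert (HR : 0 <= RInt f0 a q). { apply RInt_ge_0. lra. apply ex_f0; lra.
    intros x Hx. apply Rlt_le, f0_pos. lra. }
  rewrite <- Gam_diff in HR by lra. lra.
Qed.

Definition Gh q := if Rlt_dec 0 q then Gam rho q else 0.

Lemma Gh_pos q : 0 < q -> Gh q = Gam rho q.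
Proof. intros. unfold Gh. destruct Rlt_dec; [auto|lra]. Qed.
Lemma Gh_0 : Gh 0 = 0.
Proof. unfold Gh. destruct Rlt_dec; [lra|auto]. Qed.
Lemma Gh_nonneg q : q <= pmax -> 0 <= Gh q.
Proof. intros. unfold Gh. destruct Rlt_dec. apply Gam_nonneg; lra. lra. Qed.

Lemma Gh_cont x : 0 <= x <= pmax -> cont_in Gh 0 pmax x.
Proof.
  intros Hx eps Heps. destruct (Req_EM_T x 0) as [->|Hx0].
  - destruct (Gam_lim0 eps Heps) as [d [Hd H]]. exists d. split; auto.
    intros y Hy1 Hy2. rewrite Gh_0, Rminus_0_r. destruct (Req_EM_T y 0) as [->|].
    rewrite Gh_0, Rabs_R0; auto. rewrite Gh_pos by lra. 
    specialize (H y). rewrite Rminus_0_r in H. apply H. rewrite Rminus_0_r in Hy2.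
    apply Rabs_lt_b in Hy2. lra.
  - exists (Rmin (x/2) (eps * x / 2)). split. apply Rmin_pos; try lra. 
    apply Rmult_lt_0_compat; [apply Rmult_lt_0_compat|]; lra.
    intros y Hy1 Hy2. assert (Hm1 := Rmin_l (x/2) (eps * x / 2)). assert (Hm2 := Rmin_r (x/2) (eps * x / 2)).
    apply Rabs_lt_b in Hy2 as Hy3.
    rewrite !Gh_pos by lra. rewrite Gam_diff by lra.
    eapply Rle_lt_trans. apply (RInt_abs_bound f0 x y (/ (x/2))). apply ex_f0; lra.
    intros q Hq. apply f0_bound. lra. unfold Rmin, Rmax in Hq. destruct Rle_dec; lra.
    apply (Rmult_lt_reg_r (x/2)). lra. rewrite Rmult_assoc, Rinv_l, Rmult_1_r by lra.
    replace (eps * (x/2)) with (eps * x / 2) by field. lra.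
Qed.
End EOS.

Definition kq (rho : R -> R) q := exp (- Gam rho q) * / (rho q + q) * H0 rho q.
Definition Ef e a := e * ((1 + e) * a + 6 * e * (1 - a)).

Lemma exp_le1 x : 0 <= x -> 0 < exp (- x) <= 1.
Proof. intros. split. apply exp_pos. rewrite <- exp_0. destruct (Req_EM_T x 0). subst. rewrite Ropp_0. lra.
  left. apply exp_increasing. lra. Qed.

Lemma cont_at_Ef u v x : cont_at u x -> cont_at v x -> cont_at (fun z => Ef (u z) (v z)) x.
Proof. intros Hu Hv. unfold Ef.
  repeat first [apply cont_at_mult | apply cont_at_plus | apply cont_at_opp | apply cont_at_const | exact Hu | exact Hv
    | apply (cont_at_plus (fun _ => 1) (fun z => - v z)) ]. Qed.

Section K.
Variable rho : R -> R.
Variable pmax : R.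
Hypothesis Heos : eos rho pmax.

Lemma k_repr q : 0 < q <= pmax -> kq rho q = Ef (exp (- Gh rho q)) (rho q / (rho q + q)).
Proof. intros Hq. pose proof (rho_pos rho pmax Heos q Hq). unfold kq, Ef, H0. rewrite Gh_pos by lra.
  field. lra. Qed.

Lemma Ef_bound e a : 0 < e <= 1 -> 0 <= a <= 1 -> 0 <= Ef e a <= 8.
Proof. intros. unfold Ef. split; nra. Qed.

Lemma k_bound q : 0 < q <= pmax -> Rabs (kq rho q) <= 8.
Proof. intros Hq. rewrite k_repr by auto. pose proof (rho_pos rho pmax Heos q Hq).
  rewrite Rabs_right. apply Ef_bound. apply exp_le1. apply (Gh_nonneg rho pmax Heos); lra.
  split. apply Rlt_le, Rdiv_lt_0_compat; lra. apply (Rmult_le_reg_r (rho q + q)). lra.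
  field_simplify; lra.
  apply Rle_ge, Ef_bound. apply exp_le1. apply (Gh_nonneg rho pmax Heos); lra.
  split. apply Rlt_le, Rdiv_lt_0_compat; lra. apply (Rmult_le_reg_r (rho q + q)). lra.
  field_simplify; lra. Qed.

Lemma Gh_clamp_cont x y z : 0 <= x -> x < y -> y <= pmax -> cont_at (fun z => Gh rho (clamp x y z)) z.
Proof. intros. apply cont_in_clamp_all. lra. intros w Hw. apply (cont_in_sub _ 0 pmax); try lra.
  apply (Gh_cont rho pmax Heos); lra. Qed.

Lemma rho_piece (l : list R) x y :
  (forall z, 0 <= z <= pmax -> ~ In z l ->
     filterlim rho (within (fun y0 => 0 <= y0 <= pmax) (locally z)) (locally (rho z))) ->
  (forall z, 0 < z <= pmax -> exists L, filterlim rho (at_left z) (locally L)) ->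
  (forall z, 0 <= z < pmax -> exists L, filterlim rho (at_right z) (locally L)) ->
  0 < x -> x < y -> y <= pmax -> (forall z, x < z < y -> ~ In z l) -> ex_RInt (kq rho) x y.
Proof.
  intros Hc Hl Hr Hx Hxy Hy Hz.
  destruct (Hr x ltac:(lra)) as [La HLa]. destruct (Hl y ltac:(lra)) as [Lb HLb].
  apply lim_right_of in HLa. apply lim_left_of in HLb.
  assert (Hcz : forall z, x < z < y -> cont_at rho z).
  { intros z Hz'. apply (cont_in_interior rho 0 pmax). lra. apply cont_in_of. apply Hc. lra. apply Hz; auto. }
  destruct (piece_ext rho x y La Lb Hxy Hcz HLa HLb) as [phi [Hphi [Heq Hval]]].
  assert (La0 : 0 <= La). { apply (lim_right_nonneg rho x La (y - x)); try lra; auto.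
    intros w Hw. apply Rlt_le, (rho_pos rho pmax Heos). lra. }
  assert (Lb0 : 0 <= Lb). { apply (lim_left_nonneg rho y Lb (y - x)); try lra; auto.
    intros w Hw. apply Rlt_le, (rho_pos rho pmax Heos). lra. }
  assert (Hphi0 : forall w, 0 <= phi w).
  { intros w. destruct (Hval w) as [->|[->|[z [Hz' ->]]]]; auto. apply Rlt_le, (rho_pos rho pmax Heos). lra. }
  set (psi := fun z => Ef (exp (- Gh rho (clamp x y z))) (phi z / (phi z + clamp x y z))).
  apply (ex_RInt_ext (V:=R_NormedModule) psi).
  - intros z Hz'. rewrite Rmin_left, Rmax_right in Hz' by lra. unfold psi.
    rewrite clamp_id by lra. rewrite Heq by lra. rewrite k_repr by lra. reflexivity.
  - apply (ex_RInt_continuous (V:=R_CompleteNormedModule)). intros z _. apply cont_at_iff.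
    unfold psi. apply cont_at_Ef.
    + apply (cont_at_comp exp (fun z => - Gh rho (clamp x y z))). apply cont_at_opp.
      apply Gh_clamp_cont; lra. apply cont_at_exp.
    + apply cont_at_div. auto. apply cont_at_plus; auto. apply cont_at_clamp.
      pose proof (clamp_in x y z). pose proof (Hphi0 z). lra.
Qed.

Lemma w_piece (l : list R) m :
  (forall z, 0 <= z <= pmax -> ~ In z l ->
     filterlim rho (within (fun y0 => 0 <= y0 <= pmax) (locally z)) (locally (rho z))) ->
  0 < m < pmax -> (forall z, 0 < z <= m -> ~ In z l) -> ex_RInt (kq rho) 0 m.
Proof.
  intros Hc Hm Hz.
  destruct Heos as [_ [_ [_ [_ [L HL]]]]].
  set (w := fun q => / rho q * q).
  apply lim_right_of in HL.
  assert (Hcz : forall z, 0 < z <= m -> cont_at rho z).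
  { intros z Hz'. apply (cont_in_interior rho 0 pmax). lra. apply cont_in_of. apply Hc. lra. apply Hz; auto. }
  assert (Hcw : forall z, 0 < z <= m -> cont_at w z).
  { intros z Hz'. unfold w. apply cont_at_mult. apply (cont_at_comp Rinv rho). auto.
    apply cont_at_inv. pose proof (rho_pos rho pmax Heos z ltac:(lra)). lra. apply cont_at_id. }
  destruct (piece_ext w 0 m L (w m) ltac:(lra) ltac:(intros; apply Hcw; lra) HL
     (cont_at_left _ _ (Hcw m ltac:(lra)))) as [phi [Hphi [Heq Hval]]].
  assert (L0 : 0 <= L). { apply (lim_right_nonneg w 0 L m); try lra; auto.
    intros q Hq. unfold w. pose proof (rho_pos rho pmax Heos q ltac:(lra)).
    apply Rlt_le, Rmult_lt_0_compat. apply Rinv_0_lt_compat; lra. lra. }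
  assert (Hw0 : forall q, 0 < q <= m -> 0 <= w q).
  { intros q Hq. unfold w. pose proof (rho_pos rho pmax Heos q ltac:(lra)).
    apply Rlt_le, Rmult_lt_0_compat. apply Rinv_0_lt_compat; lra. lra. }
  assert (Hphi0 : forall q, 0 <= phi q).
  { intros q. destruct (Hval q) as [->|[->|[z [Hz' ->]]]]; auto. apply Hw0; lra. apply Hw0; lra. }
  set (psi := fun z => Ef (exp (- Gh rho (clamp 0 m z))) (1 / (1 + phi z))).
  apply (ex_RInt_ext (V:=R_NormedModule) psi).
  - intros z Hz'. rewrite Rmin_left, Rmax_right in Hz' by lra. unfold psi.
    rewrite clamp_id by lra. rewrite Heq by lra. rewrite k_repr by lra. f_equal.
    unfold w. pose proof (rho_pos rho pmax Heos z ltac:(lra)). field. split; lra.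
  - apply (ex_RInt_continuous (V:=R_CompleteNormedModule)). intros z _. apply cont_at_iff.
    unfold psi. apply cont_at_Ef.
    + apply (cont_at_comp exp (fun z => - Gh rho (clamp 0 m z))). apply cont_at_opp.
      apply Gh_clamp_cont; lra. apply cont_at_exp.
    + apply cont_at_div. apply cont_at_const. apply cont_at_plus; auto. apply cont_at_const.
      pose proof (Hphi0 z). lra.
Qed.

Lemma ex_k y : 0 <= y <= pmax -> ex_RInt (kq rho) 0 y.
Proof.
  intros Hy. destruct Heos as [Hp [[l [Hc [Hl Hr]]] _]].
  apply (pw_combine_ex _ l). lra.
  intros x y' Hx Hxy Hy' Hz.
  destruct (Rlt_dec 0 x).
  - apply (rho_piece l); auto; try lra.
  - assert (x = 0) by lra. subst x.
    apply (ex_RInt_Chasles (V:=R_CompleteNormedModule) _ 0 (y'/2) y').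
    + apply (w_piece l); auto. lra. intros z Hz'. apply Hz. lra.
    + apply (rho_piece l); auto; try lra. intros z Hz'. apply Hz. lra.
Qed.
End K.

Definition Iq (rho : R -> R) (y : R) : R := RInt (kq rho) 0 y.

Section IQ.
Variable rho : R -> R.
Variable pmax : R.
Hypothesis Heos : eos rho pmax.

Lemma ex_k_any x y : 0 <= x <= pmax -> 0 <= y <= pmax -> ex_RInt (kq rho) x y.
Proof.
  intros Hx Hy.
  assert (H : forall a b, 0 <= a <= b -> b <= pmax -> ex_RInt (kq rho) a b).
  { intros a b Hab Hb. apply (ex_RInt_Chasles_2 (V:=R_CompleteNormedModule) _ 0). lra.
    apply (ex_k rho pmax Heos). lra. }
  destruct (Rle_dec x y). apply H; lra. apply (ex_RInt_swap (V:=R_NormedModule)). apply H; lra.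
Qed.

Lemma Iq_diff x y : 0 <= x <= pmax -> 0 <= y <= pmax ->
  ex_RInt (kq rho) x y /\ Iq rho y - Iq rho x = RInt (kq rho) x y.
Proof.
  intros Hx Hy. split. apply ex_k_any; auto.
  unfold Iq. rewrite <- (RInt_Chasles (V:=R_CompleteNormedModule) (kq rho) 0 x y).
  unfold plus; simpl. ring. apply ex_k_any; lra. apply ex_k_any; lra.
Qed.

Lemma Iq_bound x y : 0 <= x <= pmax -> 0 <= y <= pmax -> Rabs (RInt (kq rho) x y) <= Rabs (y - x) * 8.
Proof.
  intros Hx Hy.
  set (kk := fun q => if Rlt_dec 0 q then kq rho q else 0).
  assert (E : forall q, Rmin x y < q < Rmax x y -> kq rho q = kk q).
  { intros q Hq. unfold kk. destruct Rlt_dec; auto. exfalso.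
    unfold Rmin, Rmax in Hq. destruct Rle_dec; lra. }
  rewrite (RInt_ext (V:=R_CompleteNormedModule) _ kk) by auto.
  apply RInt_abs_bound. apply (ex_RInt_ext (V:=R_NormedModule) (kq rho)); auto. apply ex_k_any; auto.
  intros q Hq. unfold kk. destruct Rlt_dec. apply (k_bound rho pmax Heos).
  split; auto. unfold Rmin, Rmax in Hq. destruct Rle_dec; lra.
  rewrite Rabs_R0. lra.
Qed.

Lemma Iq_cont x : 0 <= x <= pmax -> cont_in (Iq rho) 0 pmax x.
Proof.
  intros Hx eps Heps. exists (eps / 9). split. lra. intros y Hy Hxy.
  destruct (Iq_diff x y Hx Hy) as [_ ->].
  eapply Rle_lt_trans. apply Iq_bound; auto. lra.
Qed.

Lemma Iq_0 : Iq rho 0 = 0.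
Proof. unfold Iq. rewrite RInt_point. reflexivity. Qed.

Lemma Iq_abs y : 0 <= y <= pmax -> Rabs (Iq rho y) <= 8 * y.
Proof. intros Hy. unfold Iq. eapply Rle_trans. apply Iq_bound; lra. rewrite Rminus_0_r, Rabs_right by lra. lra. Qed.

Lemma Gh_diff x y : 0 < x <= pmax -> 0 < y <= pmax ->
  ex_RInt (f0 rho) x y /\ Gh rho y - Gh rho x = RInt (f0 rho) x y.
Proof. intros. split. apply (ex_f0 rho pmax Heos); auto. rewrite !Gh_pos by lra. apply (Gam_diff rho pmax Heos); auto. Qed.

End IQ.

Definition Gf (u h p I : R -> R) s := u s ^ 2 * s * ((1 - / h s) / 2 + 4 * PI * s ^ 2 * p s) ^ 2 * h s
  - (1 - u s ^ 2) * (s * (1 - / h s) / 2) / 2 + (u s ^ 2 - u s) * (4 * PI * s ^ 3 * p s) + 4 * PI * s ^ 3 * I s.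

Lemma G_deriv (u h p I : R -> R) (r du dh dp dI rho0 N : R) :
  0 < r -> 0 < h r -> 0 < rho0 -> 0 < p r ->
  is_derive u r du -> is_derive h r dh -> is_derive p r dp -> is_derive I r dI ->
  r * dh / (h r) ^ 2 = 8 * PI * rho0 * r ^ 2 - 1 + / h r ->
  N = 4 * PI * (rho0 + p r) * h r * r - dh / (2 * h r) ->
  dp = - (rho0 + p r) * N ->
  du = u r * (- (dp * / (rho0 + p r))) ->
  dI = dp * (u r * / (rho0 + p r) * (rho0 + rho0 * u r + 6 * p r * u r)) ->
  is_derive (Gf u h p I) r
    (4 * PI * r ^ 2 * (- (rho0 * (/ (2 * rho0) * (1 - u r) * (rho0 + rho0 * u r + 6 * p r * u r)
       - 3 * / rho0 * I r)))).
Proof.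
  intros Hr Hh Hrho Hp Hu Hhd Hpd HI E1 EN Ep Eu EI.
  unfold Gf. auto_derive.
  - repeat split; try (eexists; eassumption); lra.
  - replace (Derive (fun x => u x) r) with du by (symmetry; apply is_derive_unique; auto).
    replace (Derive (fun x => h x) r) with dh by (symmetry; apply is_derive_unique; auto).
    replace (Derive (fun x => p x) r) with dp by (symmetry; apply is_derive_unique; auto).
    replace (Derive (fun x => I x) r) with dI by (symmetry; apply is_derive_unique; auto).
    assert (Edh : dh = (8 * PI * rho0 * r ^ 2 - 1 + / h r) * (h r) ^ 2 / r).
    { rewrite <- E1. field. lra. }
    subst dI du dp N. rewrite Edh. field. repeat split; lra.
Qed.

Lemma gen_from (f J : R -> R) (l B1 : R) :
  (forall b, B1 < b -> is_RInt f 0 b (J b)) ->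
  (forall eps, 0 < eps -> exists B, forall b, B < b -> Rabs (J b - l) < eps) ->
  is_RInt_gen f (at_point 0) (Rbar_locally p_infty) l.
Proof.
  intros HI HJ P HP.
  destruct HP as [eps Heps].
  destruct (HJ eps (cond_pos eps)) as [B HB].
  apply (Filter_prod _ _ _ (fun a => a = 0) (fun b => Rmax B B1 < b)).
  - reflexivity.
  - exists (Rmax B B1). auto.
  - intros a b Ha Hb. simpl. subst a. exists (J b). split.
    apply HI. pose proof (Rmax_r B B1). lra.
    apply Heps. apply ball_R. apply HB. pose proof (Rmax_l B B1). lra.
Qed.

Lemma Rp_ge1 r x : 1 <= r -> 0 <= x -> 1 <= Rpower r x.
Proof. intros Hr Hx. unfold Rpower.
  assert (0 <= ln r). { destruct (Req_EM_T r 1) as [->|]. rewrite ln_1; lra. left. rewrite <- ln_1. apply ln_increasing; lra. }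
  pose proof (exp_ineq1_le (x * ln r)). assert (0 <= x * ln r) by (apply Rmult_le_pos; auto). lra. Qed.

Lemma Rp_big x K : 0 < x -> exists B, 1 <= B /\ forall r, B < r -> K < Rpower r x.
Proof. intros Hx. exists (Rmax 1 (exp (K / x))). split. apply Rmax_l. intros r Hr.
  pose proof (Rmax_l 1 (exp (K / x))). pose proof (Rmax_r 1 (exp (K / x))).
  unfold Rpower. pose proof (exp_ineq1_le (x * ln r)) as E1.
  assert (E2 : K / x < ln r). { rewrite <- (ln_exp (K / x)). apply ln_increasing. apply exp_pos. lra. }
  assert (E3 : K < x * ln r). { apply (Rmult_lt_compat_l x) in E2; auto.
    replace (x * (K / x)) with K in E2 by (field; lra). lra. }
  lra. Qed.

Lemma Rp_pos r x : 0 < Rpower r x.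
Proof. unfold Rpower. apply exp_pos. Qed.

Lemma Oinf0 f k : Oinf f k -> exists R0 C, 0 < R0 /\ forall r, R0 < r -> Rabs (f r) <= C * / Rpower r k.
Proof. intros [R0 [HR0 [_ HC]]]. destruct (HC 0%nat) as [C HC0]. exists R0, C. split; auto.
  intros r Hr. specialize (HC0 r Hr). simpl in HC0. rewrite Rplus_0_r, Rpower_Ropp in HC0. exact HC0. Qed.

Lemma Oinf1 f k : Oinf f k -> exists R0 C, 0 < R0 /\ forall r, R0 < r -> Rabs (Derive f r) <= C * / (Rpower r k * r).
Proof. intros [R0 [HR0 [_ HC]]]. destruct (HC 1%nat) as [C HC0]. exists R0, C. split; auto.
  intros r Hr. specialize (HC0 r Hr). simpl in HC0. rewrite Rpower_Ropp, Rpower_plus, Rpower_1 in HC0 by lra. exact HC0. Qed.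

Lemma list_gap (l : list R) r : exists d, 0 < d /\ forall z, r < z < r + d -> ~ In z l.
Proof. induction l as [|c l [d [Hd H]]].
  - exists 1. split. lra. intros z _ [].
  - destruct (Rlt_dec r c).
    + exists (Rmin d (c - r)). split. apply Rmin_pos; lra. intros z Hz [E|Hin].
      subst c. pose proof (Rmin_r d (z - r)). lra. apply (H z); auto. pose proof (Rmin_l d (c - r)). lra.
    + exists d. split; auto. intros z Hz [E|Hin]. subst. lra. apply (H z); auto.
Qed.

Lemma dense_le (g B : R -> R) r l d0 : 0 < d0 -> cont_at g r -> cont_at B r ->
  (forall s, r < s < r + d0 -> ~ In s l -> g s <= B s) -> g r <= B r.
Proof.
  intros Hd0 Hg HB H. apply Rnot_lt_le. intros Hlt.
  destruct (list_gap l r) as [d1 [Hd1 Hgap]].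
  destruct (cont_at_pos_near (fun s => g s - B s) r (cont_at_minus g B r Hg HB) ltac:(lra)) as [d2 [Hd2 H2]].
  set (m := Rmin d0 (Rmin d1 d2)).
  assert (m <= d0) by apply Rmin_l. assert (Rmin d1 d2 <= d1) by apply Rmin_l. assert (Rmin d1 d2 <= d2) by apply Rmin_r.
  assert (m <= Rmin d1 d2) by apply Rmin_r. assert (0 < m) by (unfold m; repeat apply Rmin_pos; lra).
  specialize (H (r + m / 2) ltac:(lra) (Hgap (r + m / 2) ltac:(lra))).
  specialize (H2 (r + m / 2)). simpl in H2. assert (Hm2 : Rabs (r + m / 2 - r) < d2).
  { replace (r + m/2 - r) with (m/2) by ring. rewrite Rabs_right; lra. }
  specialize (H2 Hm2). lra.
Qed.

Lemma GG_bound_alg (u X Y h r T4 C : R) : 0 < r -> 0 < u <= 1 -> Rabs X <= C -> 0 <= Y <= 1 -> 0 < h <= 2 ->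
  Rabs T4 <= 8 * Y ->
  Rabs (u ^ 2 * (X + Y) ^ 2 * h / r - (1 - u ^ 2) * X / 2 + (u ^ 2 - u) * Y + T4) <= 2 * (C + 1) ^ 2 / r + (1 - u) * C + 9 * Y.
Proof.
  intros Hr Hu HX HY Hh HT.
  pose proof HX as HX0. apply Rabs_le_b in HX. apply Rabs_le_b in HT.
  assert (A : 0 <= u ^ 2 * (X + Y) ^ 2 * h / r <= 2 * (C + 1) ^ 2 / r).
  { assert (E1 : (X + Y) ^ 2 <= (C + 1) ^ 2). { assert (F1 : 0 <= C + 1 - (X + Y)) by lra. assert (F2 : 0 <= C + 1 + (X + Y)) by lra.
      pose proof (Rmult_le_pos _ _ F1 F2). nra. }
    assert (E2 : 0 <= (X + Y) ^ 2) by apply pow2_ge_0.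
    assert (E0 : 0 <= u ^ 2) by apply pow2_ge_0.
    assert (E4 : u ^ 2 <= 1) by nra.
    assert (E5 : u ^ 2 * (X + Y) ^ 2 <= (C + 1) ^ 2).
    { apply Rle_trans with (1 * (X + Y) ^ 2). apply Rmult_le_compat_r; auto. lra. }
    assert (E6 : 0 <= u ^ 2 * (X + Y) ^ 2) by (apply Rmult_le_pos; auto).
    assert (E3 : u ^ 2 * (X + Y) ^ 2 * h <= 2 * (C + 1) ^ 2).
    { apply Rle_trans with (u ^ 2 * (X + Y) ^ 2 * 2). apply Rmult_le_compat_l; lra. lra. }
    split. unfold Rdiv. apply Rmult_le_pos. apply Rmult_le_pos; lra. apply Rlt_le, Rinv_0_lt_compat; lra.
    unfold Rdiv. apply Rmult_le_compat_r. apply Rlt_le, Rinv_0_lt_compat; lra. auto. }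
  assert (B : Rabs ((1 - u ^ 2) * X / 2) <= (1 - u) * C).
  { replace ((1 - u ^ 2) * X / 2) with ((1 - u) * ((1 + u) / 2 * X)) by field.
    rewrite Rabs_mult, (Rabs_right (1 - u)) by lra. apply Rmult_le_compat_l. lra.
    rewrite Rabs_mult, (Rabs_right ((1 + u) / 2)) by lra.
    apply Rle_trans with (1 * Rabs X). apply Rmult_le_compat_r. apply Rabs_pos. lra. lra. }
  assert (Cc : Rabs ((u ^ 2 - u) * Y) <= Y).
  { replace ((u ^ 2 - u) * Y) with (- (u * (1 - u) * Y)) by ring. rewrite Rabs_Ropp.
    rewrite Rabs_right. assert (0 <= u * (1 - u) <= 1) by nra.
    apply Rle_trans with (1 * Y). apply Rmult_le_compat_r; lra. lra.
    apply Rle_ge. apply Rmult_le_pos. apply Rmult_le_pos; lra. lra. }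
  apply Rabs_le_b in B. apply Rabs_le_b in Cc.
  apply Rabs_le_i. split; lra.
Qed.

Section MAIN.
Variable rho : R -> R.
Variable pmax : R.
Variables V h p : R -> R.
Variables Sf Srho : R -> Prop.
Hypothesis Heos : eos rho pmax.
Hypothesis Hb : forall r, 0 <= r -> 0 < V r /\ 0 < h r /\ 0 <= p r <= pmax.
Hypothesis Hpc : C0_half p.
Hypothesis Hhc : C0_half h.
Hypothesis HSrho : forall r, 0 < r -> ~ Srho r -> continuous (fun r => rho (p r)) r.
Hypothesis HSrho_l : onesided_lims (fun r => rho (p r)).
Hypothesis HSf : forall r, 0 < r -> ~ Sf r ->
    let rh := rho (p r) in
    let V1 := Derive V r in
    let V2 := Derive (Derive V) r in
    let h1 := Derive h r in
    ex_derive V r /\ ex_derive (Derive V) r /\ ex_derive h r /\ ex_derive p r /\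
    / h r * (V2 - h1 * V1 / (2 * h r) + 2 * V1 / r)
      = 4 * PI * (rh + 3 * p r) * V r /\
    h1 / (r * h r)
      = / V r * (V2 - h1 * V1 / (2 * h r)) + 4 * PI * (rh - p r) * h r /\
    1 - / h r + r * h1 / (2 * (h r) ^ 2)
      = / V r * (r * V1 / h r) + 4 * PI * (rh - p r) * r ^ 2 /\
    Derive p r = - / V r * (rh + p r) * V1.

Definition uu s := exp (- Gh rho (p s)).
Definition II (s : R) : R := Iq rho (p s).
Definition GG := Gf uu h p II.

Lemma p_cont r : 0 < r -> cont_at p r.
Proof. intros. apply cont_at_iff. apply Hpc. auto. Qed.

Lemma p_near r : 0 < r -> 0 < p r -> exists d, 0 < d /\ forall s, Rabs (s - r) < d ->
  (0 < p s <= pmax) /\ cont_at p s /\ 0 < s.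
Proof.
  intros Hr Hp. destruct (cont_at_pos_near p r (p_cont r Hr) Hp) as [d [Hd H]].
  exists (Rmin d r). split. apply Rmin_pos; auto. intros s Hs.
  assert (Rmin d r <= d) by apply Rmin_l. assert (Rmin d r <= r) by apply Rmin_r.
  apply Rabs_lt_b in Hs as Hs'. assert (0 < s) by lra.
  split; [|split]; auto. split. apply H. lra. apply Hb. lra. apply p_cont. auto.
Qed.

Lemma field_algebra (r H dh rh P V1 V2 Vr : R) : 0 < r -> 0 < H -> 0 < Vr ->
  / H * (V2 - dh * V1 / (2 * H) + 2 * V1 / r) = 4 * PI * (rh + 3 * P) * Vr ->
  dh / (r * H) = / Vr * (V2 - dh * V1 / (2 * H)) + 4 * PI * (rh - P) * H ->
  1 - / H + r * dh / (2 * H ^ 2) = / Vr * (r * V1 / H) + 4 * PI * (rh - P) * r ^ 2 ->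
  V1 / Vr = 4 * PI * (rh + P) * H * r - dh / (2 * H) /\
  r * dh / H ^ 2 = 8 * PI * rh * r ^ 2 - 1 + / H.
Proof.
  intros Hr HH HV Lap RR TT.
  assert (EA : V2 - dh * V1 / (2 * H) = 4 * PI * (rh + 3 * P) * Vr * H - 2 * V1 / r).
  { rewrite <- Lap. field. lra. }
  assert (E2 : V1 / Vr = 4 * PI * (rh + P) * H * r - dh / (2 * H)).
  { replace (dh / (2 * H)) with (r / 2 * (dh / (r * H))) by (field; lra).
    rewrite RR, EA. field. lra. }
  split; auto.
  replace (/ Vr * (r * V1 / H)) with (r / H * (V1 / Vr)) in TT by (field; lra).
  rewrite E2 in TT.
  replace (r * dh / (2 * H ^ 2)) with ((r * dh / H ^ 2) / 2) in TT by (field; lra).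
  replace (r / H * (4 * PI * (rh + P) * H * r - dh / (2 * H))) with
    (4 * PI * (rh + P) * r ^ 2 - (r * dh / H ^ 2) / 2) in TT by (field; lra).
  lra.
Qed.

Lemma good_deriv r : 0 < r -> 0 < p r -> ~ Sf r -> ~ Srho r ->
  is_derive GG r (radial_integrand rho p r).
Proof.
  intros Hr Hp HnS HnR.
  destruct (HSf r Hr HnS) as [HV [HdV [Hh [Hpd [Lap [RR [TT Eu]]]]]]].
  cbv zeta in Lap, RR, TT, Eu.
  destruct (Hb r ltac:(lra)) as [HVr [Hhr Hpr]].
  assert (Hrc : cont_at (fun s => rho (p s)) r) by (apply cont_at_iff; apply HSrho; auto).
  assert (Hrpos : 0 < rho (p r)) by (apply (rho_pos rho pmax Heos); lra).
  destruct (p_near r Hr Hp) as [d [Hd Hnear]].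
  set (dp := Derive p r).
  assert (Hdp : is_derive p r dp) by (apply Derive_correct; auto).
  assert (HG : is_derive (fun s => Gh rho (p s)) r (dp * f0 rho (p r))).
  { apply (chain_lemma (Gh rho) (f0 rho) p (fun q => 0 < q <= pmax)).
    - intros x y Hx Hy. apply (Gh_diff rho pmax Heos); auto.
    - exists d. split; auto. intros s Hs. destruct (Hnear s Hs) as [A [B _]]. auto.
    - unfold f0. apply (cont_at_comp Rinv (fun s => rho (p s) + p s)).
      apply cont_at_plus; auto. apply p_cont; auto. apply cont_at_inv. lra.
    - auto. }
  assert (Hu : is_derive uu r (uu r * (- (dp * f0 rho (p r))))).
  { unfold uu. 
    assert (H1 : is_derive (fun s => - Gh rho (p s)) r (- (dp * f0 rho (p r)))).
    { apply (is_derive_opp (fun s => Gh rho (p s))). auto. }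
    pose proof (is_derive_comp exp (fun s => - Gh rho (p s)) r (exp (- Gh rho (p r))) _ (proj2 (is_derive_Reals _ _ _) (derivable_pt_lim_exp _)) H1) as H2.
    replace (exp (- Gh rho (p r)) * - (dp * f0 rho (p r))) with (scal (- (dp * f0 rho (p r))) (exp (- Gh rho (p r)))).
    exact H2. unfold scal; simpl; unfold mult; simpl; ring. }
  assert (HI : is_derive II r (dp * kq rho (p r))).
  { apply (chain_lemma (Iq rho) (kq rho) p (fun q => 0 <= q <= pmax)).
    - intros x y Hx Hy. apply (Iq_diff rho pmax Heos); auto.
    - exists d. split; auto. intros s Hs. destruct (Hnear s Hs) as [A [B _]]. split; auto. lra.
    - apply (cont_at_ext_loc _ (fun s => Ef (exp (- Gh rho (p s))) (rho (p s) / (rho (p s) + p s)))).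
      + exists d. split; auto. intros s Hs. destruct (Hnear s Hs) as [A _].
        apply (k_repr rho pmax Heos). auto.
      + apply cont_at_Ef.
        * apply (cont_at_comp exp (fun s => - Gh rho (p s))). apply cont_at_opp.
          apply (cont_in_comp_at (Gh rho) 0 pmax). apply (Gh_cont rho pmax Heos). lra.
          apply p_cont; auto. exists d. split; auto. intros s Hs. destruct (Hnear s Hs) as [A _]. lra.
          apply cont_at_exp.
        * apply cont_at_div; auto. apply cont_at_plus; auto. apply p_cont; auto. lra.
    - auto. }
  assert (Hrhs : radial_integrand rho p r = 4 * PI * r ^ 2 * (- (rho (p r) * (/ (2 * rho (p r)) * (1 - uu r) *
     (rho (p r) + rho (p r) * uu r + 6 * p r * uu r) - 3 * / rho (p r) * II r)))).
  { unfold radial_integrand, J0, H0, uu, II, Iq. rewrite Gh_pos by lra. reflexivity. }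
  rewrite Hrhs.
  destruct (field_algebra r (h r) (Derive h r) (rho (p r)) (p r) (Derive V r) (Derive (Derive V) r) (V r))
    as [E2 E1]; auto.
  apply (G_deriv uu h p II r (uu r * (- (dp * f0 rho (p r)))) (Derive h r) dp (dp * kq rho (p r)) (rho (p r)) (Derive V r / V r)); auto.
  - apply Derive_correct; auto.
  - unfold dp. rewrite Eu. field. lra.
  - unfold kq, H0, uu. rewrite Gh_pos by lra. ring.
Qed.

Ltac cont_tac := repeat first
  [ apply cont_at_plus | apply cont_at_minus | apply cont_at_mult | apply cont_at_opp
  | apply cont_at_pow | apply cont_at_divc | apply cont_at_const | apply cont_at_clamp | assumption ].

Lemma p_cin x y s : 0 <= x -> x <= s <= y -> cont_in p x y s.
Proof. apply cont_in_half. intros; apply p_cont; auto. apply lim_right_of. apply Hpc. Qed.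
Lemma h_cin x y s : 0 <= x -> x <= s <= y -> cont_in h x y s.
Proof. apply cont_in_half. intros; apply cont_at_iff; apply Hhc; auto. apply lim_right_of. apply Hhc. Qed.

Lemma p_range x y t : 0 <= x -> x <= t <= y -> 0 <= p t <= pmax.
Proof. intros. apply Hb. lra. Qed.

Lemma blocks x y : 0 <= x < y -> forall t,
  cont_at (fun t => p (clamp x y t)) t /\ cont_at (fun t => h (clamp x y t)) t /\
  cont_at (fun t => uu (clamp x y t)) t /\ cont_at (fun t => II (clamp x y t)) t.
Proof.
  intros Hxy t. pose proof (clamp_in x y t ltac:(lra)) as Hc.
  split; [|split; [|split]].
  - apply clamp_cont. lra. apply p_cin; lra.
  - apply clamp_cont. lra. apply h_cin; lra.
  - unfold uu. apply (cont_at_comp exp (fun t => - Gh rho (p (clamp x y t)))); [|apply cont_at_exp].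
    apply cont_at_opp. apply (clamp_cont (fun t => Gh rho (p t))). lra.
    apply (cont_in_comp (Gh rho) 0 pmax). apply (Gh_cont rho pmax Heos). apply p_range with x y; lra.
    apply p_cin; lra. intros; apply p_range with x y; lra. lra.
  - unfold II. apply (clamp_cont (fun t => Iq rho (p t))). lra.
    apply (cont_in_comp (Iq rho) 0 pmax). apply (Iq_cont rho pmax Heos). apply p_range with x y; lra.
    apply p_cin; lra. intros; apply p_range with x y; lra. lra.
Qed.

Lemma GG_clamp x y : 0 <= x < y -> forall t, cont_at (fun t => GG (clamp x y t)) t.
Proof.
  intros Hxy t. destruct (blocks x y Hxy t) as [Hp [Hh [Hu HI]]].
  pose proof (clamp_in x y t ltac:(lra)) as Hc.
  assert (Hhpos : 0 < h (clamp x y t)) by (apply Hb; lra).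
  assert (Hhi : cont_at (fun t => / h (clamp x y t)) t) by (apply cont_at_Rinv; auto; lra).
  unfold GG, Gf. cont_tac.
Qed.

Lemma integrand_eq z : 0 < z -> 0 < p z -> radial_integrand rho p z =
  4 * PI * z ^ 2 * (- (/ 2 * (1 - uu z) * (rho (p z) + rho (p z) * uu z + 6 * p z * uu z) - 3 * II z)).
Proof.
  intros Hz Hp. assert (0 < rho (p z)) by (apply (rho_pos rho pmax Heos); pose proof (Hb z); split; [lra|apply Hb; lra]).
  unfold radial_integrand, J0, H0, uu, II, Iq. rewrite Gh_pos by lra. set (RI := RInt _ _ _). set (E := exp _). field. lra.
Qed.

Lemma FTC_main b lf lr : 0 < b -> (forall r, 0 < r < b -> 0 < p r) ->
  (forall z, Sf z -> z < b + 1 -> In z lf) -> (forall z, Srho z -> z < b + 1 -> In z lr) ->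
  is_RInt (radial_integrand rho p) 0 b (GG b - GG 0).
Proof.
  intros Hb0 Hpos Hlf Hlr.
  apply (pw_combine _ _ (lf ++ lr)). lra.
  intros x y Hx Hxy Hy Hz.
  assert (Hgood : forall z, x < z < y -> ~ Sf z /\ ~ Srho z).
  { intros z Hz'. split; intros HS; apply (Hz z Hz'); apply in_or_app; [left; apply Hlf|right; apply Hlr]; auto; lra. }
  assert (Hcz : forall z, x < z < y -> cont_at (fun r => rho (p r)) z).
  { intros z Hz'. apply cont_at_iff. apply HSrho. lra. apply Hgood; auto. }
  destruct HSrho_l as [Hl1 Hl0].
  assert (HLa : exists La, lim_right (fun r => rho (p r)) x La).
  { destruct (Req_EM_T x 0) as [->|].
    - destruct Hl0 as [L HL]. exists L. apply lim_right_of; auto.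
    - destruct (Hl1 x ltac:(lra)) as [_ [L HL]]. exists L. apply lim_right_of; auto. }
  assert (HLb : exists Lb, lim_left (fun r => rho (p r)) y Lb).
  { destruct (Hl1 y ltac:(lra)) as [[L HL] _]. exists L. apply lim_left_of; auto. }
  destruct HLa as [La HLa]. destruct HLb as [Lb HLb].
  destruct (piece_ext _ x y La Lb Hxy Hcz HLa HLb) as [rt [Hrt [Hrteq _]]].
  set (phi := fun t => 4 * PI * (clamp x y t) ^ 2 * (- (/ 2 * (1 - uu (clamp x y t)) *
     (rt t + rt t * uu (clamp x y t) + 6 * p (clamp x y t) * uu (clamp x y t)) - 3 * II (clamp x y t)))).
  assert (Hphi : forall t, cont_at phi t).
  { intros t. destruct (blocks x y ltac:(lra) t) as [Hp [Hh [Hu HI]]]. pose proof (Hrt t).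
    unfold phi. cont_tac. }
  assert (Heq : forall z, x < z < y -> phi z = radial_integrand rho p z).
  { intros z Hz'. rewrite integrand_eq by (try apply Hpos; lra). unfold phi.
    rewrite clamp_id by lra. rewrite Hrteq by auto. reflexivity. }
  apply (is_RInt_ext phi). { intros z Hz'. rewrite Rmin_left, Rmax_right in Hz' by lra. apply Heq; auto. }
  apply piece_FTC; auto.
  - intros z Hz'. rewrite Heq by auto. apply good_deriv; try lra. apply Hpos; lra. apply Hgood; auto. apply Hgood; auto.
  - apply cont_in_of_clamp; try lra. apply GG_clamp; lra.
  - apply cont_in_of_clamp; try lra. apply GG_clamp; lra.
Qed.

Lemma GG_0 : GG 0 = 0.
Proof. unfold GG, Gf. assert (0 < h 0) by (apply Hb; lra). field. lra. Qed.

Lemma GG_surface Rad M : 0 < Rad -> p Rad = 0 -> V Rad ^ 2 = 1 - 2 * M / Rad -> h Rad = / (V Rad ^ 2) ->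
  GG Rad = M ^ 2 / Rad * / (1 - 2 * M / Rad).
Proof.
  intros HR Hp HV Hh.
  assert (Hu : uu Rad = 1). { unfold uu. rewrite Hp, Gh_0, Ropp_0, exp_0. reflexivity. }
  assert (HI : II Rad = 0). { unfold II. rewrite Hp. apply Iq_0. }
  destruct (Hb Rad ltac:(lra)) as [_ [Hhp _]].
  assert (Hne : 1 - 2 * M / Rad <> 0). { intros E. rewrite Hh, HV, E, Rinv_0 in Hhp. lra. }
  unfold GG, Gf. rewrite Hu, HI, Hp, Hh, HV. rewrite Rinv_inv. field. all: try (split; auto). all: try lra.
  intros E. apply Hne. replace (2 * M) with Rad by lra. field. lra.
Qed.

Lemma p_bound_good (Cv0 Cv1 Ch0 Ch1 r : R) :
  Rabs (1 - V r) <= Cv0 * / Rpower r 1 ->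
  Rabs (Derive (fun r => 1 - V r) r) <= Cv1 * / (Rpower r 1 * r) ->
  Rabs (h r - 1) <= Ch0 * / Rpower r 1 ->
  Rabs (Derive (fun r => h r - 1) r) <= Ch1 * / (Rpower r 1 * r) ->
  1 < r -> 2 * Rabs Cv0 < r -> 2 * Rabs Ch0 < r -> ~ Sf r -> 0 < p r ->
  p r <= (2 * Rabs Cv1 + Rabs Ch1) / r ^ 3.
Proof.
  intros H1 H2 H3 H4 Hr HCv HCh HnS Hp.
  rewrite Rpower_1 in H1, H2, H3, H4 by lra.
  destruct (HSf r ltac:(lra) HnS) as [HV [HdV [Hh [Hpd [Lap [RR [TT Eu]]]]]]].
  cbv zeta in Lap, RR, TT, Eu.
  destruct (Hb r ltac:(lra)) as [HVr [Hhr Hpr]].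
  assert (Hrpos : 0 < rho (p r)) by (apply (rho_pos rho pmax Heos); lra).
  destruct (field_algebra r (h r) (Derive h r) (rho (p r)) (p r) (Derive V r) (Derive (Derive V) r) (V r))
    as [E2 _]; auto; try lra.
  assert (Hinvr : 0 < / r) by (apply Rinv_0_lt_compat; lra).
  assert (Hc1 : forall C, C * / r <= Rabs C * / r).
  { intros. apply Rmult_le_compat_r. lra. apply Rle_abs. }
  assert (HV2 : V r > 1/2).
  { pose proof (Hc1 Cv0). apply Rabs_le_b in H1.
    assert (Rabs Cv0 * / r < 1/2). { apply (Rmult_lt_reg_r r). lra. rewrite Rmult_assoc, Rinv_l, Rmult_1_r by lra. lra. }
    lra. }
  assert (Hh2 : h r > 1/2).
  { pose proof (Hc1 Ch0). apply Rabs_le_b in H3.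
    assert (Rabs Ch0 * / r < 1/2). { apply (Rmult_lt_reg_r r). lra. rewrite Rmult_assoc, Rinv_l, Rmult_1_r by lra. lra. }
    lra. }
  rewrite Derive_minus in H2 by (try apply ex_derive_const; auto).
  rewrite Derive_minus in H4 by (try apply ex_derive_const; auto).
  rewrite Derive_const in H2, H4.
  replace (0 - Derive V r) with (- Derive V r) in H2 by ring. rewrite Rabs_Ropp in H2.
  replace (Derive h r - 0) with (Derive h r) in H4 by ring.
  assert (Hrr : 0 < r * r) by nra.
  assert (B1 : Rabs (Derive V r) <= Rabs Cv1 / (r * r)).
  { eapply Rle_trans. apply H2. unfold Rdiv. apply Rmult_le_compat_r. apply Rlt_le, Rinv_0_lt_compat; auto. apply Rle_abs. }
  assert (B2 : Rabs (Derive h r) <= Rabs Ch1 / (r * r)).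
  { eapply Rle_trans. apply H4. unfold Rdiv. apply Rmult_le_compat_r. apply Rlt_le, Rinv_0_lt_compat; auto. apply Rle_abs. }
  set (Q := rho (p r) + p r).
  assert (EQ : 4 * PI * Q * h r * r = Derive V r / V r + Derive h r / (2 * h r)) by (unfold Q; lra).
  assert (B3 : Derive V r / V r <= 2 * Rabs (Derive V r)).
  { unfold Rdiv. apply Rle_trans with (Rabs (Derive V r) * / V r).
    apply Rmult_le_compat_r. apply Rlt_le, Rinv_0_lt_compat; lra. apply Rle_abs.
    rewrite Rmult_comm. apply Rmult_le_compat_r. apply Rabs_pos.
    apply (Rmult_le_reg_r (V r)). lra. rewrite Rinv_l by lra. lra. }
  assert (B4 : Derive h r / (2 * h r) <= Rabs (Derive h r)).
  { unfold Rdiv. apply Rle_trans with (Rabs (Derive h r) * / (2 * h r)).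
    apply Rmult_le_compat_r. apply Rlt_le, Rinv_0_lt_compat; lra. apply Rle_abs.
    rewrite <- (Rmult_1_r (Rabs (Derive h r))) at 2. apply Rmult_le_compat_l. apply Rabs_pos.
    apply (Rmult_le_reg_r (2 * h r)). lra. rewrite Rinv_l by lra. lra. }
  assert (B5 : 4 * PI * Q * h r * r <= (2 * Rabs Cv1 + Rabs Ch1) / (r * r)).
  { rewrite EQ. unfold Rdiv in *. lra. }
  assert (HQ : 0 < Q) by (unfold Q; lra).
  assert (HPI : 3 < PI) by (pose proof PI2_3_2; lra).
  assert (B6 : Q * r <= 4 * PI * Q * h r * r).
  { assert (1 <= 4 * PI * h r) by nra. 
    replace (4 * PI * Q * h r * r) with ((4 * PI * h r) * (Q * r)) by ring.
    rewrite <- (Rmult_1_l (Q * r)) at 1. apply Rmult_le_compat_r. nra. lra. }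
  assert (B7 : Q <= (2 * Rabs Cv1 + Rabs Ch1) / r ^ 3).
  { apply (Rmult_le_reg_r r). lra. replace ((2 * Rabs Cv1 + Rabs Ch1) / r ^ 3 * r) with ((2 * Rabs Cv1 + Rabs Ch1) / (r * r)) by (field; lra). lra. }
  unfold Q in B7. lra.
Qed.

Ltac split_max H := repeat match type of H with
  | Rmax _ _ < _ => let H1 := fresh "Hm" in let H2 := fresh "Hm" in
       apply Rmax_Rlt in H; destruct H as [H1 H2]; split_max H1; split_max H2
  end.

Lemma GG_lim_inf : (forall r, 0 <= r -> 0 < p r) -> AFMD rho V h p -> locfin Sf ->
  forall eps, 0 < eps -> exists B, forall b, B < b -> Rabs (GG b - 0) < eps.
Proof.
  intros Hinf [e0 [He0 [HOV [HOh HOr]]]] Hloc eps Heps.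
  destruct (Oinf0 _ _ HOV) as [Rv0 [Cv0 [_ HV0]]].
  destruct (Oinf1 _ _ HOV) as [Rv1 [Cv1 [_ HV1]]].
  destruct (Oinf0 _ _ HOh) as [Rh0 [Ch0 [_ HH0]]].
  destruct (Oinf1 _ _ HOh) as [Rh1 [Ch1 [_ HH1]]].
  destruct (Oinf0 _ _ HOr) as [Rr0 [Cr [_ HR0]]].
  set (K := 2 * Rabs Cv1 + Rabs Ch1).
  assert (HK : 0 <= K) by (unfold K; pose proof (Rabs_pos Cv1); pose proof (Rabs_pos Ch1); lra).
  set (RA := Rmax (Rmax 1 (Rmax Rv0 Rv1)) (Rmax (Rmax Rh0 Rh1) (Rmax (2 * Rabs Cv0) (2 * Rabs Ch0)))).
  assert (HpB : forall r, RA < r -> p r <= K / r ^ 3).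
  { intros r Hr. destruct (Hloc (r + 1)) as [l Hl].
    assert (Hr1 : 1 < r). { unfold RA in Hr. split_max Hr. lra. }
    apply (dense_le p (fun s => K / s ^ 3) r l 1). lra. apply p_cont; lra.
    unfold Rdiv. apply cont_at_mult. apply cont_at_const. apply cont_at_Rinv. apply cont_at_pow. apply cont_at_id.
    apply pow_nonzero. lra.
    intros s Hs Hsl. assert (Hs' : RA < s) by lra. unfold RA in Hs'. split_max Hs'.
    apply (p_bound_good Cv0 Cv1 Ch0 Ch1 s); auto; try lra.
    intros HS. apply Hsl. apply Hl; auto; lra. apply Hinf. lra. }
  assert (HRA1 : 1 <= RA) by (unfold RA; apply Rle_trans with (Rmax 1 (Rmax Rv0 Rv1)); apply Rmax_l).
  destruct Heos as [Hpm [_ [_ [_ [L HL]]]]].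
  apply lim_right_of in HL. destruct (HL 1 ltac:(lra)) as [dL [HdL HL1]].
  set (dd := Rmin dL pmax).
  assert (Hdd : 0 < dd) by (apply Rmin_pos; lra).
  assert (Heq : forall q, 0 < q < dd -> q <= (Rabs L + 1) * rho q).
  { intros q Hq. assert (Rmin dL pmax <= dL) by apply Rmin_l. assert (Rmin dL pmax <= pmax) by apply Rmin_r.
    fold dd in H, H0.
    assert (Hrq : 0 < rho q) by (apply (rho_pos rho pmax Heos); lra).
    specialize (HL1 q ltac:(lra)). apply Rabs_lt_b in HL1. pose proof (Rle_abs L).
    replace q with (rho q * (/ rho q * q)) at 1 by (field; lra). rewrite Rmult_comm.
    apply Rmult_le_compat_r; lra. }
  set (C := Rabs Ch0).
  assert (HC : 0 <= C) by apply Rabs_pos.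
  set (eu := eps / (3 * (C + 1))).
  assert (Heu : 0 < eu) by (unfold eu; apply Rdiv_lt_0_compat; lra).
  destruct (Gh_cont rho pmax Heos 0 ltac:(lra) eu Heu) as [dG [HdG HG]].
  set (T := Rmin 1 (eps / 27)).
  assert (HT : 0 < T) by (apply Rmin_pos; lra).
  destruct (Rp_big e0 (4 * PI * (Rabs L + 1) * Rabs Cr / T) He0) as [BY [HBY1 HBY]].
  exists (Rmax (Rmax RA Rr0) (Rmax (Rmax (K / dd + 1) (K / dG + 1)) (Rmax BY (6 * (C + 1) ^ 2 / eps + 1)))).
  intros b Hb'. split_max Hb'. assert (HRA : RA < b) by lra. unfold RA in HRA. split_max HRA.
  assert (Hb1 : 1 < b) by lra.
  assert (Hpb : 0 < p b) by (apply Hinf; lra).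
  assert (Hpb2 : p b <= K / b ^ 3) by (apply HpB; lra).
  assert (Hb3 : b <= b ^ 3) by (simpl; nra).
  assert (Hsmall : forall d, 0 < d -> K / d + 1 < b -> K / b ^ 3 < d).
  { intros d Hd Hbd. apply (Rmult_lt_reg_r (b ^ 3)). nra. unfold Rdiv. rewrite Rmult_assoc, Rinv_l, Rmult_1_r by (apply pow_nonzero; lra).
    assert (K * / d < b) by (unfold Rdiv in Hbd; lra).
    apply (Rmult_lt_compat_r d) in H; auto. rewrite Rmult_assoc, Rinv_l, Rmult_1_r in H by lra. nra. }
  assert (Hp_dd : p b < dd) by (pose proof (Hsmall dd Hdd ltac:(lra)); lra).
  assert (Hp_dG : p b < dG) by (pose proof (Hsmall dG HdG ltac:(lra)); lra).
  destruct (Hb b ltac:(lra)) as [HVb [Hhb Hpbm]].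
  set (Y := 4 * PI * b ^ 3 * p b).
  assert (HPI : 3 < PI) by (pose proof PI2_3_2; lra).
  assert (HY0 : 0 <= Y). { unfold Y. assert (0 < b ^ 3) by (apply pow_lt; lra). assert (0 < 4 * PI) by lra.
    apply Rlt_le. apply Rmult_lt_0_compat; [apply Rmult_lt_0_compat|]; lra. }
  assert (HRp : Rpower b (3 + e0) = b ^ 3 * Rpower b e0).
  { rewrite Rpower_plus. f_equal. replace 3 with (INR 3) by (simpl; ring). apply Rpower_pow. lra. }
  assert (HYT : Y < T).
  { specialize (HR0 b ltac:(lra)). rewrite HRp in HR0.
    pose proof (Heq (p b) ltac:(lra)) as Hq.
    assert (Hrb : rho (p b) <= Rabs Cr * / (b ^ 3 * Rpower b e0)).
    { apply Rabs_le_b in HR0. apply Rle_trans with (Cr * / (b ^ 3 * Rpower b e0)). lra.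
      apply Rmult_le_compat_r. apply Rlt_le, Rinv_0_lt_compat. apply Rmult_lt_0_compat. apply pow_lt; lra. apply Rp_pos.
      apply Rle_abs. }
    specialize (HBY b ltac:(lra)).
    pose proof (Rp_pos b e0) as Hpe.
    assert (HLp : 0 < Rabs L + 1) by (pose proof (Rabs_pos L); lra).
    assert (Y <= 4 * PI * (Rabs L + 1) * Rabs Cr / Rpower b e0).
    { unfold Y. apply Rle_trans with (4 * PI * b ^ 3 * ((Rabs L + 1) * rho (p b))).
      apply Rmult_le_compat_l. apply Rlt_le. apply Rmult_lt_0_compat. lra. apply pow_lt; lra. auto.
      apply Rle_trans with (4 * PI * b ^ 3 * ((Rabs L + 1) * (Rabs Cr * / (b ^ 3 * Rpower b e0)))).
      apply Rmult_le_compat_l. apply Rlt_le. apply Rmult_lt_0_compat. lra. apply pow_lt; lra.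
      apply Rmult_le_compat_l; lra. right. field. split; lra. }
    apply Rle_lt_trans with (1 := H).
    apply (Rmult_lt_reg_r (Rpower b e0 / T)). apply Rdiv_lt_0_compat; lra.
    replace (4 * PI * (Rabs L + 1) * Rabs Cr / Rpower b e0 * (Rpower b e0 / T)) with (4 * PI * (Rabs L + 1) * Rabs Cr / T) by (field; lra).
    replace (T * (Rpower b e0 / T)) with (Rpower b e0) by (field; lra). lra. }
  assert (HT1 : T <= 1) by apply Rmin_l. assert (HT2 : T <= eps / 27) by apply Rmin_r.
  set (u := uu b).
  assert (HGh0 : 0 <= Gh rho (p b)) by (apply (Gh_nonneg rho pmax Heos); lra).
  assert (Hu : 0 < u <= 1) by (unfold u, uu; apply exp_le1; auto).
  assert (Hu1 : 1 - u < eu).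
  { assert (1 - u <= Gh rho (p b)). { unfold u, uu. pose proof (exp_ineq1_le (- Gh rho (p b))). lra. }
    specialize (HG (p b) ltac:(lra)). rewrite Rminus_0_r, Gh_0, Rminus_0_r in HG.
    rewrite Rabs_right in HG by lra. assert (Gh rho (p b) < eu) by (rewrite <- (Rabs_right (Gh rho (p b))) by lra; apply HG; lra). lra. }
  assert (Hhb1 : Rabs (h b - 1) <= C / b).
  { specialize (HH0 b ltac:(lra)). rewrite Rpower_1 in HH0 by lra. eapply Rle_trans. apply HH0.
    unfold Rdiv. apply Rmult_le_compat_r. apply Rlt_le, Rinv_0_lt_compat; lra. apply Rle_abs. }
  assert (HCb : C / b < 1 / 2).
  { apply (Rmult_lt_reg_r b). lra. unfold Rdiv. rewrite Rmult_assoc, Rinv_l by lra. unfold C. lra. }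
  assert (Hh12 : 1/2 < h b <= 2) by (apply Rabs_le_b in Hhb1; lra).
  set (X := b * (1 - / h b) / 2).
  assert (HX : Rabs X <= C).
  { assert (EX : X = (h b - 1) * b / (2 * h b)) by (unfold X; field; lra).
    rewrite EX. unfold Rdiv. rewrite !Rabs_mult. rewrite (Rabs_right b) by lra.
    rewrite (Rabs_right (/ (2 * h b))) by (apply Rle_ge, Rlt_le, Rinv_0_lt_compat; lra).
    assert (Rabs (h b - 1) * b <= C) by (apply (Rmult_le_compat_r b) in Hhb1; [|lra]; unfold Rdiv in Hhb1;
      rewrite Rmult_assoc, Rinv_l, Rmult_1_r in Hhb1 by lra; lra).
    assert (/ (2 * h b) <= 1) by (rewrite <- Rinv_1; apply Rinv_le_contravar; lra).
    assert (0 <= Rabs (h b - 1) * b) by (apply Rmult_le_pos; [apply Rabs_pos|lra]).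
    nra. }
  assert (HT4 : Rabs (4 * PI * b ^ 3 * II b) <= 8 * Y).
  { unfold II, Y. rewrite Rabs_mult. rewrite (Rabs_right (4 * PI * b ^ 3)).
    pose proof (Iq_abs rho pmax Heos (p b) ltac:(lra)).
    assert (0 < 4 * PI * b ^ 3) by (assert (0 < b ^ 3) by (apply pow_lt; lra); nra). nra.
    apply Rle_ge. assert (0 < b ^ 3) by (apply pow_lt; lra). nra. }
  assert (EG : GG b = u ^ 2 * (X + Y) ^ 2 * h b / b - (1 - u ^ 2) * X / 2 + (u ^ 2 - u) * Y + 4 * PI * b ^ 3 * II b).
  { unfold GG, Gf, X, Y, u. field. lra. }
  rewrite Rminus_0_r, EG.
  eapply Rle_lt_trans. apply (GG_bound_alg u X Y (h b) b (4 * PI * b ^ 3 * II b) C); auto; lra.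
  assert (A1 : 2 * (C + 1) ^ 2 / b < eps / 3).
  { apply (Rmult_lt_reg_r b). lra. unfold Rdiv at 1. rewrite Rmult_assoc, Rinv_l, Rmult_1_r by lra.
    assert (6 * (C + 1) ^ 2 / eps < b) by lra.
    apply (Rmult_lt_compat_r eps) in H; auto. unfold Rdiv in H. rewrite Rmult_assoc, Rinv_l, Rmult_1_r in H by lra. lra. }
  assert (A2 : (1 - u) * C <= eps / 3 * (C / (C + 1))).
  { apply Rle_trans with (eu * C). apply Rmult_le_compat_r; lra. unfold eu. right. field. lra. }
  assert (A3 : C / (C + 1) < 1). { apply (Rmult_lt_reg_r (C + 1)). lra. unfold Rdiv. rewrite Rmult_assoc, Rinv_l by lra. lra. }
  assert (A4 : eps / 3 * (C / (C + 1)) <= eps / 3).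
  { rewrite <- (Rmult_1_r (eps / 3)) at 2. apply Rmult_le_compat_l. lra. lra. }
  lra.
Qed.

End MAIN.

Lemma rho0_zero (rho : R -> R) (V h p : R -> R) Rad :
  AFMD rho V h p -> (forall r, Rad <= r -> p r = 0) -> rho 0 = 0.
Proof.
  intros [e0 [He0 [_ [_ HOr]]]] Hp0.
  destruct (Oinf0 _ _ HOr) as [R0 [C [_ HR]]].
  destruct (Req_EM_T (rho 0) 0) as [E|Hne]; auto. exfalso.
  assert (Ha : 0 < Rabs (rho 0)) by (apply Rabs_pos_lt; auto).
  destruct (Rp_big (3 + e0) ((Rabs C + 1) / Rabs (rho 0)) ltac:(lra)) as [B [HB1 HB]].
  set (r := Rmax (Rmax R0 Rad) B + 1).
  assert (Hr1 : Rmax R0 Rad <= Rmax (Rmax R0 Rad) B) by apply Rmax_l.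
  assert (Hr2 : B <= Rmax (Rmax R0 Rad) B) by apply Rmax_r.
  assert (Hr3 : R0 <= Rmax R0 Rad) by apply Rmax_l. assert (Hr4 : Rad <= Rmax R0 Rad) by apply Rmax_r.
  specialize (HR r ltac:(unfold r; lra)). rewrite (Hp0 r) in HR by (unfold r; lra).
  specialize (HB r ltac:(unfold r; lra)).
  pose proof (Rp_pos r (3 + e0)) as Hp.
  assert (Rabs (rho 0) * Rpower r (3 + e0) <= Rabs C).
  { apply (Rmult_le_compat_r (Rpower r (3 + e0))) in HR; [|lra].
    rewrite Rmult_assoc, Rinv_l, Rmult_1_r in HR by lra. pose proof (Rle_abs C). lra. }
  apply (Rmult_lt_compat_l (Rabs (rho 0))) in HB; auto.
  replace (Rabs (rho 0) * ((Rabs C + 1) / Rabs (rho 0))) with (Rabs C + 1) in HB by (field; lra).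
  lra.
Qed.

Theorem proposition6 (rho : R -> R) (pmax : R) (V h p : R -> R) :
  eos rho pmax ->
  (forall r, 0 <= r -> 0 < V r /\ 0 < h r /\ 0 <= p r <= pmax) ->
  regular rho V h p ->
  field_eqs rho V h p ->
  AFMD rho V h p ->
  (forall M Rad, finite_extent V h p M Rad ->
     is_RInt_gen (radial_integrand rho p) (at_point 0) (Rbar_locally p_infty)
       (M ^ 2 / Rad * / (1 - 2 * M / Rad))) /\
  (extends_to_infinity p ->
     is_RInt_gen (radial_integrand rho p) (at_point 0) (Rbar_locally p_infty) 0).
Proof.
  intros Heos Hb Hreg Hfe HAF.
  destruct Hreg as [[Hpc _] [[Srho [HSloc [HSc HSl]]] [_ [Hhc _]]]].
  destruct Hfe as [Sf [HSfloc HSf]].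
  split.
  - intros M Rad [HR [Hiff Hext]].
    assert (Hp0 : forall r, Rad <= r -> p r = 0).
    { intros r Hr. destruct (Hb r ltac:(lra)) as [_ [_ Hpr]].
      destruct (Req_EM_T (p r) 0) as [E|Hne]; auto. exfalso.
      assert (0 < p r) by lra. apply Hiff in H; lra. }
    assert (Hrho0 : rho 0 = 0) by (apply (rho0_zero rho V h p Rad); auto).
    destruct (HSfloc (Rad + 1)) as [lf Hlf]. destruct (HSloc (Rad + 1)) as [lr Hlr].
    assert (HI : is_RInt (radial_integrand rho p) 0 Rad (GG rho h p Rad - GG rho h p 0)).
    { apply (FTC_main rho pmax V h p Sf Srho Heos Hb Hpc Hhc HSc HSl HSf Rad lf lr); auto.
      intros r Hr. apply Hiff; lra. }
    destruct (Hext Rad ltac:(lra)) as [HV HhR].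
    rewrite (GG_surface rho pmax V h p Hb Rad M HR (Hp0 Rad ltac:(lra)) HV HhR) in HI.
    rewrite (GG_0 rho pmax V h p Hb) in HI. rewrite Rminus_0_r in HI.
    apply (gen_from _ (fun _ => M ^ 2 / Rad * / (1 - 2 * M / Rad)) _ Rad).
    + intros b Hbb.
      replace (M ^ 2 / Rad * / (1 - 2 * M / Rad)) with (plus (M ^ 2 / Rad * / (1 - 2 * M / Rad)) 0)
        by (unfold plus; simpl; ring).
      apply (is_RInt_Chasles (V:=R_NormedModule) _ 0 Rad b); auto.
      apply (is_RInt_ext (fun _ => 0)).
      * intros z Hz. rewrite Rmin_left, Rmax_right in Hz by lra.
        unfold radial_integrand. rewrite (Hp0 z) by lra. rewrite Hrho0. rewrite Rmult_0_l, Ropp_0, Rmult_0_r. reflexivity.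
      * pose proof (is_RInt_const (V:=R_NormedModule) Rad b 0) as Hc.
        replace (scal (b - Rad) (0 : R_NormedModule)) with 0 in Hc by (unfold scal; simpl; unfold mult; simpl; ring).
        exact Hc.
    + intros eps Heps. exists 0. intros. rewrite Rminus_eq_0, Rabs_R0. auto.
  - intros Hinf.
    apply (gen_from _ (GG rho h p) _ 0).
    + intros b Hbb. destruct (HSfloc (b + 1)) as [lf Hlf]. destruct (HSloc (b + 1)) as [lr Hlr].
      pose proof (FTC_main rho pmax V h p Sf Srho Heos Hb Hpc Hhc HSc HSl HSf b lf lr Hbb) as H.
      rewrite (GG_0 rho pmax V h p Hb), Rminus_0_r in H. apply H; auto.
      intros r Hr. apply Hinf. lra.
    + apply (GG_lim_inf rho pmax V h p Sf Heos Hb Hpc HSf); auto.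
Qed.
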